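(* Let $(X,\mathcal F)$ be a measurable space, $\mu\colon\mathcal F\to[0,\infty]$ a submodular monotone measure, $A\in\mathcal F$, $p>1$ and $q$ with $1/p+1/q=1$. Let $f,g,h\colon X\to[0,\infty)$ be measurable and put $a=\int_A gf^p\,d\mu$, $b=\int_A hf^p\,d\mu$, assumed to lie in $(0,\infty)$. Then $$\int_A f\,d\mu\le 2^{1/p}H_{pq}(a,b),\qquad H_{pq}(a,b)=(ab)^{1/p}\Big(\int_A\frac{1}{(bg+ah)^{q-1}}\,d\mu\Big)^{1/q},$$ with the convention $1/0=\infty$. Moreover, equality holds if $(bg+ah)^q f^p=\gamma$ on $X$ for some constant $\gamma\ge0$, provided that either $\mu$ is modular or $gf^p$ and $hf^p$ are comonotone. All integrals are Choquet integrals.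
   Context: A monotone measure is a map $\mu\colon\mathcal F\to[0,\infty]$ with $\mu(\emptyset)=0$, $\mu(X)>0$ and $\mu(A)\le\mu(B)$ for $A\subset B$. It is submodular if $\mu(A\cap B)+\mu(A\cup B)\le\mu(A)+\mu(B)$ for all $A,B\in\mathcal F$, and modular if equality always holds. The Choquet integral of a measurable $f\colon X\to[0,\infty]$ on $A\in\mathcal F$ is $\int_A f\,d\mu=\int_0^\infty\mu(A\cap\{f\ge t\})\,dt$. Functions $\phi,\psi$ are comonotone if $(\phi(x)-\phi(y))(\psi(x)-\psi(y))\ge0$ for all $x,y$. *)

(* Defs.v *)
From Stdlib Require Import Reals Lra List Classical ClassicalEpsilon.
Open Scope R_scope.

(** Extended reals (only nonnegative values, and +oo, are used). *)
Inductive ER : Type := Fin (r : R) | Inf.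

Definition ERle (u v : ER) : Prop :=
  match u, v with
  | Fin x, Fin y => x <= y
  | _, Inf => True
  | Inf, Fin _ => False
  end.

Definition ERlt (u v : ER) : Prop := ERle u v /\ u <> v.

Definition ERadd (u v : ER) : ER :=
  match u, v with
  | Fin x, Fin y => Fin (x + y)
  | _, _ => Inf
  end.

(** multiplication of an extended real by a real scalar c >= 0, 0 * oo = 0 *)
Definition ERmulR (c : R) (u : ER) : ER :=
  match u with
  | Fin x => Fin (c * x)
  | Inf => if Req_EM_T c 0 then Fin 0 else Inf
  end.

(** real power for a nonnegative base and positive exponent: 0^y = 0 *)
Definition powR (x y : R) : R :=
  if Rle_dec x 0 then 0 else Rpower x y.

Definition ERpow (u : ER) (y : R) : ER :=
  match u with
  | Fin x => Fin (powR x y)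
  | Inf => Inf
  end.

Definition ERinv (r : R) : ER :=
  if Req_EM_T r 0 then Inf else Fin (/ r).

Definition is_ERsup (S : ER -> Prop) (s : ER) : Prop :=
  (forall e, S e -> ERle e s) /\
  (forall u, (forall e, S e -> ERle e u) -> ERle s u).

Definition ERsup (S : ER -> Prop) : ER :=
  epsilon (inhabits Inf) (fun s => is_ERsup S s).

Definition sigma_algebra {X : Type} (F : (X -> Prop) -> Prop) : Prop :=
  F (fun _ => False) /\
  (forall A, F A -> F (fun x => ~ A x)) /\
  (forall An : nat -> X -> Prop, (forall n, F (An n)) ->
     F (fun x => exists n, An n x)).

Definition monotone_measure {X : Type} (F : (X -> Prop) -> Prop)
  (mu : (X -> Prop) -> ER) : Prop :=
  mu (fun _ => False) = Fin 0 /\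
  ERlt (Fin 0) (mu (fun _ => True)) /\
  (forall A B, F A -> F B -> (forall x, A x -> B x) -> ERle (mu A) (mu B)).

Definition submodular {X : Type} (F : (X -> Prop) -> Prop)
  (mu : (X -> Prop) -> ER) : Prop :=
  forall A B, F A -> F B ->
    ERle (ERadd (mu (fun x => A x /\ B x)) (mu (fun x => A x \/ B x)))
         (ERadd (mu A) (mu B)).

Definition modular {X : Type} (F : (X -> Prop) -> Prop)
  (mu : (X -> Prop) -> ER) : Prop :=
  forall A B, F A -> F B ->
    ERadd (mu (fun x => A x /\ B x)) (mu (fun x => A x \/ B x))
    = ERadd (mu A) (mu B).

Definition measurable_fun {X : Type} (F : (X -> Prop) -> Prop) (f : X -> R) : Prop :=
  forall t : R, F (fun x => t <= f x).

Definition comonotone {X : Type} (phi psi : X -> R) : Prop :=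
  forall x y, 0 <= (phi x - phi y) * (psi x - psi y).

(** Lower Darboux sums of t |-> phi t over 0 = t0 < t1 < ... < tk:
    sum_i (t_i - t_{i-1}) * phi t_i. *)
Fixpoint incr_from (prev : R) (l : list R) : Prop :=
  match l with
  | nil => True
  | t :: l' => prev < t /\ incr_from t l'
  end.

Fixpoint lower_sum (phi : R -> ER) (prev : R) (l : list R) : ER :=
  match l with
  | nil => Fin 0
  | t :: l' => ERadd (ERmulR (t - prev) (phi t)) (lower_sum phi t l')
  end.

(** Lebesgue integral over (0,oo) of a nonincreasing [0,oo]-valued function,
    as the supremum of its lower step sums. *)
Definition int_0_inf (phi : R -> ER) : ER :=
  ERsup (fun e => exists l, incr_from 0 l /\ e = lower_sum phi 0 l).

Definition choquet {X : Type} (mu : (X -> Prop) -> ER) (A : X -> Prop)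
  (f : X -> ER) : ER :=
  int_0_inf (fun t => mu (fun x => A x /\ ERle (Fin t) (f x))).

Definition Hpq {X : Type} (mu : (X -> Prop) -> ER) (A : X -> Prop)
  (p q : R) (g h : X -> R) (a b : R) : ER :=
  ERmulR (powR (a * b) (/ p))
    (ERpow (choquet mu A (fun x => ERinv (powR (b * g x + a * h x) (q - 1))))
           (/ q)).

(* Main.v *)
Require Import Defs.
From Stdlib Require Import Reals Lra Lia ZArith List Classical ClassicalEpsilon FunctionalExtensionality PropExtensionality.
Open Scope R_scope.


Lemma ERle_refl u : ERle u u.
Proof. destruct u; simpl; lra || auto. Qed.

Lemma ERle_trans u v w : ERle u v -> ERle v w -> ERle u w.
Proof. destruct u, v, w; simpl; intros; try lra; auto; contradiction. Qed.

Lemma ERle_antisym u v : ERle u v -> ERle v u -> u = v.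
Proof. destruct u, v; simpl; intros; try contradiction; auto. f_equal; lra. Qed.

Lemma ERle_Inf u : ERle u Inf.
Proof. destruct u; simpl; auto. Qed.

Lemma ERle_Inf_l u : ERle Inf u -> u = Inf.
Proof. destruct u; simpl; tauto. Qed.

Lemma ERadd_le u u' v v' : ERle u u' -> ERle v v' -> ERle (ERadd u v) (ERadd u' v').
Proof. destruct u, u', v, v'; simpl; intros; try lra; auto. Qed.

Lemma ERadd_comm u v : ERadd u v = ERadd v u.
Proof. destruct u, v; simpl; auto. f_equal; lra. Qed.

Lemma ERmulR_le c u v : 0 <= c -> ERle u v -> ERle (ERmulR c u) (ERmulR c v).
Proof.
  destruct u, v; simpl; intros; try contradiction.
  - apply Rmult_le_compat_l; auto.
  - destruct (Req_EM_T c 0); simpl; auto. subst; lra.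
  - destruct (Req_EM_T c 0); simpl; auto; lra.
Qed.

Lemma ERmulR_assoc a b u : 0 <= a -> 0 <= b ->
  ERmulR a (ERmulR b u) = ERmulR (a * b) u.
Proof.
  intros; destruct u; simpl.
  - f_equal; ring.
  - destruct (Req_EM_T b 0); destruct (Req_EM_T (a*b) 0); simpl.
    + f_equal; ring.
    + subst; lra.
    + destruct (Req_EM_T a 0); [f_equal; subst; ring|].
      exfalso; apply Rmult_integral in e; lra.
    + destruct (Req_EM_T a 0); auto. subst; lra.
Qed.

Lemma ERmulR_add c u v : 0 < c ->
  ERmulR c (ERadd u v) = ERadd (ERmulR c u) (ERmulR c v).
Proof.
  intros; destruct u, v; simpl; try (destruct (Req_EM_T c 0); [lra|]); auto.
  f_equal; ring.
Qed.

Lemma ERmulR_1 u : ERmulR 1 u = u.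
Proof. destruct u; simpl. f_equal; ring. destruct (Req_EM_T 1 0); auto; lra. Qed.

Lemma ERsup_exists (S : ER -> Prop) : (exists e, S e) -> exists s, is_ERsup S s.
Proof.
  intros [e0 He0].
  destruct (classic (S Inf)) as [HI|HI].
  - exists Inf; split; [intros; apply ERle_Inf|].
    intros u Hu; apply Hu; auto.
  - destruct (classic (exists M, forall r, S (Fin r) -> r <= M)) as [[M HM]|HM].
    + assert (He : exists r, S (Fin r)).
      { destruct e0; [eauto|contradiction]. }
      destruct (completeness (fun r => S (Fin r))) as [l [Hl1 Hl2]].
      * exists M; intros r Hr; apply HM; auto.
      * exact He.
      * exists (Fin l); split.
        -- intros e He'; destruct e; [|contradiction]. simpl; apply Hl1; auto.
        -- intros u Hu; destruct u; simpl; auto.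
           apply Hl2; intros x Hx; specialize (Hu _ Hx); simpl in Hu; auto.
    + exists Inf; split; [intros; apply ERle_Inf|].
      intros u Hu; destruct u; simpl; auto.
      apply HM; exists r; intros r' Hr'; specialize (Hu _ Hr'); simpl in Hu; auto.
Qed.

Lemma ERsup_spec (S : ER -> Prop) : (exists e, S e) -> is_ERsup S (ERsup S).
Proof.
  intros H; unfold ERsup; apply epsilon_spec; apply ERsup_exists; auto.
Qed.

Lemma int_le phi l : incr_from 0 l -> ERle (lower_sum phi 0 l) (int_0_inf phi).
Proof.
  intros Hl; unfold int_0_inf.
  destruct (ERsup_spec (fun e => exists l, incr_from 0 l /\ e = lower_sum phi 0 l)) as [H1 _].
  - exists (lower_sum phi 0 nil); exists nil; simpl; auto.
  - apply H1; eauto.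
Qed.

Lemma int_ub phi e : (forall l, incr_from 0 l -> ERle (lower_sum phi 0 l) e) ->
  ERle (int_0_inf phi) e.
Proof.
  intros H; unfold int_0_inf.
  destruct (ERsup_spec (fun e => exists l, incr_from 0 l /\ e = lower_sum phi 0 l)) as [_ H2].
  - exists (lower_sum phi 0 nil); exists nil; simpl; auto.
  - apply H2; intros e' [l [Hl ->]]; auto.
Qed.

Lemma int_ge0 phi : ERle (Fin 0) (int_0_inf phi).
Proof. apply (int_le phi nil); simpl; auto. Qed.

Lemma int_single phi t : 0 < t -> ERle (ERmulR t (phi t)) (int_0_inf phi).
Proof.
  intros Ht; eapply ERle_trans; [|apply (int_le phi (t :: nil)); simpl; auto].
  simpl. replace (t - 0) with t by ring. destruct (ERmulR t (phi t)); simpl; lra || auto.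
Qed.

Lemma lower_sum_mono phi psi prev l : 0 <= prev -> incr_from prev l ->
  (forall t, 0 < t -> ERle (phi t) (psi t)) ->
  ERle (lower_sum phi prev l) (lower_sum psi prev l).
Proof.
  revert prev; induction l as [|t l IH]; intros prev Hp Hl H; simpl.
  - lra.
  - destruct Hl as [H1 H2]. apply ERadd_le.
    + apply ERmulR_le; [lra|]. apply H; lra.
    + apply IH; auto; lra.
Qed.

Lemma int_mono phi psi : (forall t, 0 < t -> ERle (phi t) (psi t)) ->
  ERle (int_0_inf phi) (int_0_inf psi).
Proof.
  intros H; apply int_ub; intros l Hl.
  eapply ERle_trans; [apply lower_sum_mono; eauto; lra|]. apply int_le; auto.
Qed.


Section Sig.
Context {X : Type} (F : (X -> Prop) -> Prop) (HF : sigma_algebra F).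

Lemma pred_ext (P Q : X -> Prop) : (forall x, P x <-> Q x) -> P = Q.
Proof. intros H; apply functional_extensionality; intros x; apply propositional_extensionality; auto. Qed.

Lemma F_ext P Q : F P -> (forall x, P x <-> Q x) -> F Q.
Proof. intros H E; rewrite <- (pred_ext P Q E); auto. Qed.

Lemma F_empty : F (fun _ => False).
Proof. apply HF. Qed.

Lemma F_compl P : F P -> F (fun x => ~ P x).
Proof. apply HF. Qed.

Lemma F_full : F (fun _ => True).
Proof. eapply F_ext; [apply F_compl, F_empty|]. intros; tauto. Qed.

Lemma F_cunion (An : nat -> X -> Prop) : (forall n, F (An n)) -> F (fun x => exists n, An n x).
Proof. apply HF. Qed.

Lemma F_cinter (An : nat -> X -> Prop) : (forall n, F (An n)) -> F (fun x => forall n, An n x).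
Proof.
  intros H. eapply F_ext.
  - apply F_compl, (F_cunion (fun n x => ~ An n x)); intros; apply F_compl; auto.
  - intros x; split.
    + intros Hn n; apply NNPP; intros Hc; apply Hn; eauto.
    + intros Hn [n Hc]; auto.
Qed.

Lemma F_union P Q : F P -> F Q -> F (fun x => P x \/ Q x).
Proof.
  intros HP HQ. eapply F_ext.
  - apply (F_cunion (fun n => match n with O => P | _ => Q end)).
    intros [|n]; auto.
  - intros x; split.
    + intros [[|n] H]; auto.
    + intros [H|H]; [exists O|exists 1%nat]; auto.
Qed.

Lemma F_inter P Q : F P -> F Q -> F (fun x => P x /\ Q x).
Proof.
  intros HP HQ. eapply F_ext.
  - apply (F_compl (fun x => ~ P x \/ ~ Q x)), F_union; apply F_compl; eauto.
  - intros x; split; [intros H; split; apply NNPP; tauto | tauto].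
Qed.

Lemma small_inv (e : R) : 0 < e -> exists n : nat, / INR (S n) < e.
Proof.
  intros He. destruct (archimed (/ e)) as [H1 _].
  assert (Hie : 0 < / e) by (apply Rinv_0_lt_compat; lra).
  assert (Hz : (0 < up (/ e))%Z) by (apply lt_IZR; simpl; lra).
  exists (Z.to_nat (up (/ e))).
  rewrite S_INR, INR_IZR_INZ, Z2Nat.id by lia.
  set (N := IZR (up (/ e))) in *.
  assert (H : / (N + 1) < / / e).
  { apply Rinv_lt_contravar; [|lra].
    apply Rmult_lt_0_compat; [lra|]. apply IZR_lt in Hz; simpl in Hz; unfold N; lra. }
  rewrite Rinv_inv in H; exact H.
Qed.

Lemma inv_S_pos n : 0 < / INR (S n).
Proof. apply Rinv_0_lt_compat, lt_0_INR; lia. Qed.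

Lemma mble_lt u : measurable_fun F u -> forall t, F (fun x => t < u x).
Proof.
  intros Hu t. eapply F_ext.
  - apply (F_cunion (fun n x => t + / INR (S n) <= u x)); intros; apply Hu.
  - intros x; split.
    + intros [n Hn]. pose proof (inv_S_pos n). lra.
    + intros Ht. destruct (small_inv (u x - t)) as [n Hn]; [lra|].
      exists n; lra.
Qed.

Lemma mble_le_inv u : measurable_fun F u -> forall t, F (fun x => u x <= t).
Proof.
  intros Hu t. eapply F_ext; [apply F_compl, (mble_lt u Hu t)|].
  intros x; split; intros; lra.
Qed.

Lemma mble_of_lt u : (forall t, F (fun x => t < u x)) -> measurable_fun F u.
Proof.
  intros H t. eapply F_ext.
  - apply (F_cinter (fun n x => t - / INR (S n) < u x)); intros; apply H.
  - intros x; split.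
    + intros Hn. apply Rnot_lt_le; intros Hc.
      destruct (small_inv (t - u x)) as [n Hn']; [lra|].
      specialize (Hn n). lra.
    + intros Ht n. pose proof (inv_S_pos n). lra.
Qed.

Lemma mble_const c : measurable_fun F (fun _ => c).
Proof.
  intros t. destruct (Rle_dec t c).
  - eapply F_ext; [apply F_full|]. intros; tauto.
  - eapply F_ext; [apply F_empty|]. intros; split; [tauto|lra].
Qed.

Lemma mble_scal c u : 0 <= c -> measurable_fun F u -> measurable_fun F (fun x => c * u x).
Proof.
  intros Hc Hu t. destruct (Req_dec c 0) as [->|Hc0].
  - eapply F_ext; [apply (mble_const 0 t)|]. intros x; rewrite Rmult_0_l; tauto.
  - eapply F_ext; [apply (Hu (t / c))|]. intros x; split; intros H.
    + apply (Rmult_le_compat_l c) in H; [|lra]. field_simplify in H; lra.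
    + apply (Rmult_le_reg_l c); [lra|]. field_simplify; lra.
Qed.

End Sig.


Definition fl (r : R) : nat := Z.to_nat (up r - 1).

Lemma fl_spec r : 0 <= r -> INR (fl r) <= r < INR (fl r) + 1.
Proof.
  intros Hr. destruct (archimed r) as [H1 H2]. unfold fl.
  assert (Hz : (0 <= up r - 1)%Z).
  { assert (Hu : (0 < up r)%Z) by (apply lt_IZR; simpl; lra). lia. }
  rewrite INR_IZR_INZ, Z2Nat.id by lia. rewrite minus_IZR. simpl. lra.
Qed.

Lemma fl_le k r : 0 <= r -> ((k <= fl r)%nat <-> INR k <= r).
Proof.
  intros Hr; destruct (fl_spec r Hr) as [H1 H2]; split; intros H.
  - apply le_INR in H; lra.
  - assert (INR k < INR (fl r + 1)) by (rewrite plus_INR; simpl; lra).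
    apply INR_lt in H0. lia.
Qed.

Lemma fl_gt r : 0 <= r -> r - 1 < INR (fl r).
Proof. intros Hr; destruct (fl_spec r Hr); lra. Qed.

Lemma powR_nonneg x y : 0 <= powR x y.
Proof. unfold powR; destruct (Rle_dec x 0); [lra|]. unfold Rpower; left; apply exp_pos. Qed.

Lemma powR_pos x y : 0 < x -> powR x y = Rpower x y.
Proof. intros; unfold powR; destruct (Rle_dec x 0); [lra|auto]. Qed.

Lemma Rpower_pos x y : 0 < Rpower x y.
Proof. unfold Rpower; apply exp_pos. Qed.

Lemma powR_0 x y : x <= 0 -> powR x y = 0.
Proof. intros; unfold powR; destruct (Rle_dec x 0); [auto|lra]. Qed.

Lemma Rpower_le_iff a b c : 0 < c -> 0 < a -> 0 < b -> (a <= b <-> Rpower a c <= Rpower b c).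
Proof.
  intros Hc Ha Hb; split; intros H.
  - apply Rle_Rpower_l; lra.
  - apply Rnot_lt_le; intros Hlt.
    assert (Rpower b c < Rpower a c) by (apply Rlt_Rpower_l; lra). lra.
Qed.

Section Meas.
Context {X : Type} (F : (X -> Prop) -> Prop) (HF : sigma_algebra F).

Lemma mble_plus u v : measurable_fun F u -> measurable_fun F v ->
  (forall x, 0 <= u x) -> (forall x, 0 <= v x) ->
  measurable_fun F (fun x => u x + v x).
Proof.
  intros Hu Hv Hu0 Hv0. apply (mble_of_lt F HF). intros t.
  eapply (F_ext F).
  - apply (F_cunion F HF (fun n x => exists k : nat,
       INR k / INR (S n) <= u x /\ t - INR k / INR (S n) < v x)).
    intros n. apply (F_cunion F HF). intros k.
    apply (F_inter F HF); [apply Hu| apply (mble_lt F HF); auto].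
  - intros x; split.
    + intros [n [k [H1 H2]]]; lra.
    + intros Ht. destruct (small_inv (u x + v x - t)) as [n Hn]; [lra|].
      exists n, (fl (u x * INR (S n))).
      assert (HN : 0 < INR (S n)) by (apply lt_0_INR; lia).
      assert (H0 : 0 <= u x * INR (S n)) by (apply Rmult_le_pos; auto; lra).
      destruct (fl_spec _ H0) as [H1 H2].
      set (k := fl (u x * INR (S n))) in *.
      split.
      * apply (Rmult_le_reg_r (INR (S n))); auto. field_simplify; lra.
      * assert (u x - / INR (S n) < INR k / INR (S n)).
        { apply (Rmult_lt_reg_r (INR (S n))); auto. field_simplify; lra. }
        lra.
Qed.

Lemma mble_mult u v : measurable_fun F u -> measurable_fun F v ->
  (forall x, 0 <= u x) -> (forall x, 0 <= v x) ->
  measurable_fun F (fun x => u x * v x).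
Proof.
  intros Hu Hv Hu0 Hv0. apply (mble_of_lt F HF). intros t.
  destruct (Rlt_dec t 0) as [Ht0|Ht0].
  { eapply (F_ext F); [apply (F_full F HF)|]. intros x; split; auto; intros _.
    pose proof (Rmult_le_pos _ _ (Hu0 x) (Hv0 x)); lra. }
  eapply (F_ext F).
  - apply (F_cunion F HF (fun n x => exists k : nat,
       INR k / INR (S n) <= u x /\ t < INR k / INR (S n) * v x)).
    intros n. apply (F_cunion F HF). intros k.
    apply (F_inter F HF); [apply Hu| apply (mble_lt F HF)].
    apply (mble_scal F HF); auto.
    apply Rmult_le_pos; [apply pos_INR|]. left; apply Rinv_0_lt_compat, lt_0_INR; lia.
  - intros x; split.
    + intros [n [k [H1 H2]]]. pose proof (Rmult_le_compat_r _ _ _ (Hv0 x) H1). lra.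
    + intros Ht.
      assert (Hux : 0 < u x).
      { destruct (Hu0 x); auto. rewrite <- H in Ht; lra. }
      assert (Hvx : 0 < v x).
      { destruct (Hv0 x); auto. rewrite <- H in Ht; lra. }
      assert (Htv : t / v x < u x).
      { apply (Rmult_lt_reg_r (v x)); auto. field_simplify; lra. }
      destruct (small_inv (u x - t / v x)) as [n Hn]; [lra|].
      exists n, (fl (u x * INR (S n))).
      assert (HN : 0 < INR (S n)) by (apply lt_0_INR; lia).
      assert (H0 : 0 <= u x * INR (S n)) by (apply Rmult_le_pos; lra).
      destruct (fl_spec _ H0) as [H1 H2].
      set (k := fl (u x * INR (S n))) in *.
      split.
      * apply (Rmult_le_reg_r (INR (S n))); auto. field_simplify; lra.
      * assert (u x - / INR (S n) < INR k / INR (S n)).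
        { apply (Rmult_lt_reg_r (INR (S n))); auto. field_simplify; lra. }
        assert (t / v x < INR k / INR (S n)) by lra.
        apply (Rmult_lt_compat_r (v x)) in H3; auto.
        field_simplify in H3; lra.
Qed.

Lemma mble_powR u p : measurable_fun F u -> (forall x, 0 <= u x) -> 0 < p ->
  measurable_fun F (fun x => powR (u x) p).
Proof.
  intros Hu Hu0 Hp t. destruct (Rle_dec t 0) as [Ht|Ht].
  { eapply (F_ext F); [apply (F_full F HF)|]. intros x; split; auto; intros _.
    pose proof (powR_nonneg (u x) p); lra. }
  eapply (F_ext F); [apply (Hu (Rpower t (/ p)))|].
  intros x. assert (Hrt := Rpower_pos t (/ p)).
  destruct (Rle_dec (u x) 0) as [Hux|Hux].
  - rewrite powR_0 by auto. split; intros; lra.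
  - rewrite powR_pos by lra.
    rewrite (Rpower_le_iff _ _ p) by (auto; lra).
    rewrite Rpower_mult, Rinv_l, Rpower_1 by lra. tauto.
Qed.

End Meas.


Definition er (e : ER) : R := match e with Fin r => r | Inf => 0 end.

Lemma er_fin e T : ERle e (Fin T) -> e = Fin (er e).
Proof. destruct e; simpl; tauto. Qed.

Section Mu.
Context {X : Type} (F : (X -> Prop) -> Prop) (HF : sigma_algebra F)
  (mu : (X -> Prop) -> ER) (Hmu : monotone_measure F mu).

Lemma mu_mono B C : F B -> F C -> (forall x, B x -> C x) -> ERle (mu B) (mu C).
Proof. destruct Hmu as [_ [_ H]]; apply H. Qed.

Lemma mu_empty : mu (fun _ => False) = Fin 0.
Proof. apply Hmu. Qed.

Lemma mu_nonneg B : F B -> ERle (Fin 0) (mu B).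
Proof.
  intros HB; rewrite <- mu_empty; apply mu_mono; auto. apply (F_empty F HF). tauto.
Qed.

Lemma mu_null B : (forall x, ~ B x) -> mu B = Fin 0.
Proof.
  intros H. rewrite <- mu_empty. f_equal. apply pred_ext. intros x; split; [apply H|tauto].
Qed.

Lemma er_nonneg B : F B -> 0 <= er (mu B).
Proof. intros HB; pose proof (mu_nonneg B HB); destruct (mu B); simpl in *; lra. Qed.

Lemma mu_subadd (Hs : submodular F mu) B C : F B -> F C ->
  ERle (mu (fun x => B x \/ C x)) (ERadd (mu B) (mu C)).
Proof.
  intros HB HC. specialize (Hs B C HB HC).
  pose proof (mu_nonneg _ (F_inter F HF _ _ HB HC)) as H0.
  destruct (mu (fun x => B x /\ C x)), (mu (fun x => B x \/ C x)), (mu B), (mu C);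
    simpl in *; auto; lra.
Qed.

Lemma choquet_mono A (u v : X -> ER) :
  (forall t, 0 < t -> F (fun x => A x /\ ERle (Fin t) (u x))) ->
  (forall t, 0 < t -> F (fun x => A x /\ ERle (Fin t) (v x))) ->
  (forall x, A x -> ERle (u x) (v x)) ->
  ERle (choquet mu A u) (choquet mu A v).
Proof.
  intros Hu Hv H. unfold choquet. apply int_mono. intros t Ht.
  apply mu_mono; auto. intros x [Ha Hx]; split; auto. eapply ERle_trans; eauto.
Qed.

Lemma choquet_single A u t : 0 < t ->
  ERle (ERmulR t (mu (fun x => A x /\ t <= u x))) (choquet mu A (fun x => Fin (u x))).
Proof. intros Ht; unfold choquet; apply (int_single (fun t => mu (fun x => A x /\ ERle (Fin t) (Fin (u x)))) t Ht). Qed.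

Fixpoint lsR (phi : R -> R) (prev : R) (l : list R) : R :=
  match l with
  | nil => 0
  | t :: l' => (t - prev) * phi t + lsR phi t l'
  end.

Lemma lower_sum_fin phi prev l : 0 <= prev -> incr_from prev l ->
  (forall t, 0 < t -> phi t = Fin (er (phi t))) ->
  lower_sum phi prev l = Fin (lsR (fun t => er (phi t)) prev l).
Proof.
  revert prev; induction l as [|t l IH]; intros prev Hp Hl H; simpl; auto.
  destruct Hl as [H1 H2]. rewrite IH by (auto; lra).
  rewrite (H t) by lra. simpl. reflexivity.
Qed.

Fixpoint scale_list (c : R) (l : list R) : list R :=
  match l with nil => nil | t :: l' => (t / c) :: scale_list c l' end.

Lemma scale_incr c prev l : 0 < c -> incr_from prev l -> incr_from (prev / c) (scale_list c l).
Proof.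
  intros Hc; revert prev; induction l as [|t l IH]; intros prev Hl; simpl; auto.
  destruct Hl as [H1 H2]; split; auto.
  apply Rmult_lt_compat_r; auto. apply Rinv_0_lt_compat; auto.
Qed.

Lemma lower_sum_scale (phi : R -> ER) c prev l : 0 < c -> 0 <= prev -> incr_from prev l ->
  lower_sum (fun t => phi (t / c)) prev l = ERmulR c (lower_sum phi (prev / c) (scale_list c l)).
Proof.
  intros Hc; revert prev; induction l as [|t l IH]; intros prev Hp Hl; simpl.
  - f_equal; ring.
  - destruct Hl as [H1 H2]. rewrite IH by (auto; lra).
    rewrite ERmulR_add by auto.
    assert (Hd : 0 <= t / c - prev / c).
    { unfold Rdiv; rewrite <- Rmult_minus_distr_r. apply Rmult_le_pos; [lra|].
      left; apply Rinv_0_lt_compat; lra. }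
    rewrite ERmulR_assoc by lra.
    f_equal. f_equal. field. lra.
Qed.

Lemma choquet_scal_le A u c : 0 < c ->
  ERle (choquet mu A (fun x => Fin (c * u x))) (ERmulR c (choquet mu A (fun x => Fin (u x)))).
Proof.
  intros Hc. unfold choquet.
  assert (E : (fun t => mu (fun x => A x /\ ERle (Fin t) (Fin (c * u x)))) =
              (fun t => (fun s => mu (fun x => A x /\ ERle (Fin s) (Fin (u x)))) (t / c))).
  { apply functional_extensionality; intros t. f_equal. apply pred_ext. intros x; simpl.
    split; intros [Ha H]; split; auto.
    - apply (Rmult_le_reg_l c); auto. field_simplify; lra.
    - apply (Rmult_le_compat_l c) in H; [|lra]. field_simplify in H; lra. }
  rewrite E. apply int_ub. intros l Hl.
  rewrite (lower_sum_scale (fun s => mu (fun x => A x /\ ERle (Fin s) (Fin (u x)))) c 0 l) by (auto; lra).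
  apply ERmulR_le; [lra|].
  replace (0 / c) with 0 by (field; lra).
  apply int_le. replace 0 with (0 / c) by (field; lra). apply scale_incr; auto.
Qed.

Lemma choquet_scal_ge A u c : 0 < c ->
  ERle (ERmulR c (choquet mu A (fun x => Fin (u x)))) (choquet mu A (fun x => Fin (c * u x))).
Proof.
  intros Hc.
  pose proof (choquet_scal_le A (fun x => c * u x) (/ c)) as H.
  assert (E : (fun x => Fin (/ c * (c * u x))) = (fun x => Fin (u x))).
  { apply functional_extensionality; intros x; f_equal; field; lra. }
  cbv beta in H; rewrite E in H.
  assert (Hci : 0 < / c) by (apply Rinv_0_lt_compat; lra).
  specialize (H Hci). apply (ERmulR_le c) in H; [|lra].
  rewrite ERmulR_assoc in H by lra.
  rewrite Rinv_r, ERmulR_1 in H by lra. apply H.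
Qed.

End Mu.


Fixpoint SS (psi : nat -> R) (k M : nat) : R :=
  match M with O => 0 | S M' => psi (S k) + SS psi (S k) M' end.

Lemma SS_add psi k a b : SS psi k (a + b) = SS psi k a + SS psi (k + a) b.
Proof.
  revert k; induction a as [|a IH]; intros k; simpl.
  - rewrite Nat.add_0_r; ring.
  - rewrite IH. replace (S k + a)%nat with (k + S a)%nat by lia. ring.
Qed.

Lemma SS_le psi psi' k M : (forall j, (k < j)%nat -> psi j <= psi' j) -> SS psi k M <= SS psi' k M.
Proof.
  revert k; induction M as [|M IH]; intros k H; simpl; [lra|].
  apply Rplus_le_compat; [apply H; lia|apply IH; intros; apply H; lia].
Qed.

Lemma SS_nonneg psi k M : (forall j, (k < j)%nat -> 0 <= psi j) -> 0 <= SS psi k M.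
Proof.
  intros H. pose proof (SS_le (fun _ => 0) psi k M H) as H'.
  assert (SS (fun _ => 0) k M = 0).
  { clear; revert k; induction M; intros; simpl; auto. rewrite IHM; ring. }
  lra.
Qed.

Lemma SS_lin psi psi' k M : SS (fun j => psi j + psi' j) k M = SS psi k M + SS psi' k M.
Proof. revert k; induction M as [|M IH]; intros k; simpl; [ring|]. rewrite IH; ring. Qed.

Lemma SS_scal c psi k M : SS (fun j => c * psi j) k M = c * SS psi k M.
Proof. revert k; induction M as [|M IH]; intros k; simpl; [ring|]. rewrite IH; ring. Qed.

Lemma SS_monoM psi k M M' : (forall j, (k < j)%nat -> 0 <= psi j) -> (M <= M')%nat ->
  SS psi k M <= SS psi k M'.
Proof.
  intros H HM. replace M' with (M + (M' - M))%nat by lia. rewrite SS_add.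
  pose proof (SS_nonneg psi (k + M) (M' - M)). assert (0 <= SS psi (k + M) (M' - M)); [|lra].
  apply H0; intros; apply H; lia.
Qed.

Lemma SS_block psi k d c : (forall j, (k < j)%nat -> (j <= k + d)%nat -> c <= psi j) ->
  INR d * c <= SS psi k d.
Proof.
  revert k; induction d as [|d IH]; intros k H; cbn [SS].
  - simpl; lra.
  - rewrite S_INR. specialize (IH (S k)).
    assert (c <= psi (S k)) by (apply H; lia).
    assert (INR d * c <= SS psi (S k) d) by (apply IH; intros; apply H; lia).
    lra.
Qed.

Fixpoint sumR (phi : R -> R) (l : list R) : R :=
  match l with nil => 0 | t :: l' => phi t + sumR phi l' end.

Lemma grid_bound (phi : R -> R) (psi : nat -> R) d c :
  0 < d -> 0 <= c -> (forall t, 0 < t -> 0 <= phi t) ->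
  (forall t j, 0 < t -> (1 <= j)%nat -> INR j <= t / d - c -> phi t <= psi j) ->
  forall l prev m, 0 <= prev -> incr_from prev l -> INR m <= Rmax 0 (prev / d - c) ->
  exists D, lsR phi prev l <= d * SS psi m D + d * (1 + c) * sumR phi l.
Proof.
  intros Hd Hc Hphi Hpsi l. induction l as [|t l IH]; intros prev m Hp Hl Hm; simpl.
  - exists O; simpl; lra.
  - destruct Hl as [Ht Hl].
    assert (H0 : 0 <= Rmax 0 (t / d - c)) by apply Rmax_l.
    destruct (fl_spec _ H0) as [Hf1 Hf2].
    set (m' := fl (Rmax 0 (t / d - c))) in *.
    assert (Hmono : Rmax 0 (prev / d - c) <= Rmax 0 (t / d - c)).
    { apply Rle_max_compat_l. assert (prev / d <= t / d).
      { apply Rmult_le_compat_r; [left; apply Rinv_0_lt_compat; lra|lra]. } lra. }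
    assert (Hmm : (m <= m')%nat).
    { assert (INR m < INR (m' + 1)) by (rewrite plus_INR; simpl; lra).
      apply INR_lt in H. lia. }
    destruct (IH t m') as [D HD]; [lra|auto|lra|].
    exists ((m' - m) + D)%nat. rewrite SS_add. replace (m + (m' - m))%nat with m' by lia.
    assert (Hblock : INR (m' - m) * phi t <= SS psi m (m' - m)).
    { apply SS_block. intros j Hj1 Hj2.
      assert (Hjm : (j <= m')%nat) by lia.
      apply Hpsi; [lra|lia|].
      apply le_INR in Hjm.
      unfold Rmax in *. destruct (Rle_dec 0 (t / d - c)); [lra|].
      assert (INR m' <= 0) by lra. assert (INR m' = 0) by (pose proof (pos_INR m'); lra).
      assert (m' = O) by (apply INR_eq; simpl; auto). lia. }
    assert (Hpt : 0 <= phi t) by (apply Hphi; lra).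
    assert (Hcount : t - prev <= d * (INR (m' - m) + 1 + c)).
    { rewrite minus_INR by auto.
      assert (Rmax 0 (prev / d - c) <= prev / d).
      { apply Rmax_lub; [|lra]. apply Rmult_le_pos; [lra|left; apply Rinv_0_lt_compat; lra]. }
      assert (t / d - c <= Rmax 0 (t / d - c)) by apply Rmax_r.
      assert (t / d - c - 1 - prev / d <= INR m' - INR m) by lra.
      apply (Rmult_le_compat_l d) in H2; [|lra].
      assert (d * (t / d - c - 1 - prev / d) = t - prev - d * (1 + c)) by (field; lra).
      lra. }
    assert ((t - prev) * phi t <= d * (INR (m' - m) * phi t) + d * (1 + c) * phi t).
    { apply (Rmult_le_compat_r (phi t)) in Hcount; auto. nra. }
    assert (d * (INR (m' - m) * phi t) <= d * SS psi m (m' - m)) by (apply Rmult_le_compat_l; lra).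
    nra.
Qed.


Lemma SS_shift psi k M : SS (fun j => psi (S j)) k M = SS psi (S k) M.
Proof. revert k; induction M as [|M IH]; intros k; simpl; auto. rewrite IH; auto. Qed.

Lemma SS_tele (a : nat -> R) k M : SS (fun j => a (j - 1)%nat - a j) k M = a k - a (k + M)%nat.
Proof.
  revert k; induction M as [|M IH]; intros k; simpl.
  - rewrite Nat.add_0_r; ring.
  - rewrite IH. replace (k - 0)%nat with k by lia. replace (S k + M)%nat with (k + S M)%nat by lia. ring.
Qed.

Lemma SS_last psi k M : SS psi k (S M) = SS psi k M + psi (k + S M)%nat.
Proof.
  replace (S M) with (M + 1)%nat by lia. rewrite SS_add. simpl.
  replace (S (k + M)) with (k + (M + 1))%nat by lia. ring.
Qed.

Lemma SS_ext psi psi' k M : (forall j, (k < j)%nat -> psi j = psi' j) -> SS psi k M = SS psi' k M.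
Proof.
  intros H; apply Rle_antisym; apply SS_le; intros j Hj; rewrite H; auto; lra.
Qed.

Section IntLemma.
Context {X : Type} (F : (X -> Prop) -> Prop) (HF : sigma_algebra F)
  (mu : (X -> Prop) -> ER) (Hmu : monotone_measure F mu) (Hs : submodular F mu)
  (A : X -> Prop) (HA : F A).

Definition mbl (h : X -> nat) := forall k, F (fun x => (k <= h x)%nat).
Definition Lv (h : X -> nat) k := fun x => A x /\ (k <= h x)%nat.
Definition psiL (h : X -> nat) k := er (mu (Lv h k)).
Definition finL (h : X -> nat) := forall B, F B -> (forall x, B x -> A x /\ (1 <= h x)%nat) ->
  mu B = Fin (er (mu B)).

Lemma Lv_F h k : mbl h -> F (Lv h k).
Proof. intros H; apply (F_inter F HF); auto. Qed.

Lemma mbl_plus f g : mbl f -> mbl g -> mbl (fun x => f x + g x)%nat.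
Proof.
  intros Hf Hg k. eapply (F_ext F).
  - apply (F_cunion F HF (fun i x => (i <= f x)%nat /\ (k - i <= g x)%nat)).
    intros i; apply (F_inter F HF); auto.
  - intros x; split.
    + intros [i [H1 H2]]; lia.
    + intros H; exists (f x); lia.
Qed.

Lemma mbl_sub1 g : mbl g -> mbl (fun x => g x - 1)%nat.
Proof.
  intros Hg k. destruct k as [|k].
  - eapply (F_ext F); [apply (F_full F HF)|]. intros; split; intros; auto; lia.
  - eapply (F_ext F); [apply (Hg (S (S k)))|]. intros; split; intros; lia.
Qed.

Lemma psiL_nonneg h k : mbl h -> 0 <= psiL h k.
Proof. intros; apply (er_nonneg F HF mu Hmu); apply Lv_F; auto. Qed.

Lemma psiL_zero h k : (forall x, (h x < k)%nat) -> psiL h k = 0.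
Proof.
  intros H; unfold psiL. rewrite (mu_null F mu Hmu); auto.
  intros x [_ Hx]; specialize (H x); lia.
Qed.

Variable s : R.
Variable Good : (X -> nat) -> (X -> nat) -> Prop.
Hypothesis Good_step : forall f g, Good f g -> Good f (fun x => g x - 1)%nat.
Hypothesis Hterm : forall f g, Good f g -> mbl f -> mbl g -> finL (fun x => f x + g x)%nat ->
  forall k, (1 <= k)%nat ->
  let P := Lv (fun x => f x + (g x - 1))%nat k in
  let Q := fun x => Lv (fun x => f x + (g x - 1))%nat (k - 1) x /\ (1 <= g x)%nat in
  s * (er (mu (fun x => P x \/ Q x)) + er (mu (fun x => P x /\ Q x))) <=
  s * (er (mu P) + er (mu Q)).

Lemma int_lemma M : forall n g f, (forall x, (g x <= n)%nat) -> mbl f -> mbl g ->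
  (forall x, (f x + g x < M)%nat) -> Good f g -> finL (fun x => f x + g x)%nat ->
  s * SS (psiL (fun x => f x + g x)%nat) 0 M <= s * (SS (psiL f) 0 M + SS (psiL g) 0 M).
Proof.
  intros n; induction n as [|n IH]; intros g f Hgn Hf Hg HM Hgood Hfin.
  - assert (E1 : SS (psiL (fun x => f x + g x)%nat) 0 M = SS (psiL f) 0 M).
    { apply SS_ext; intros j _. unfold psiL, Lv. f_equal. f_equal. apply pred_ext.
      intros x; specialize (Hgn x). split; intros [H1 H2]; split; auto; lia. }
    assert (E2 : SS (psiL g) 0 M = 0).
    { rewrite (SS_ext _ (fun _ => 0)).
      - clear; generalize O; induction M; intros; simpl; auto. rewrite IHM; ring.
      - intros j Hj; apply psiL_zero; intros x; specialize (Hgn x); lia. }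
    rewrite E1, E2, Rplus_0_r; lra.
  - set (g' := fun x => (g x - 1)%nat).
    set (H := fun x => (f x + g' x)%nat).
    assert (Hg' : mbl g') by (apply mbl_sub1; auto).
    assert (HH : mbl H) by (apply mbl_plus; auto).
    assert (HB : F (fun x => (1 <= g x)%nat)) by apply Hg.
    assert (Hfin' : finL H).
    { intros B HBm HBs; apply Hfin; auto. intros x Hx; destruct (HBs x Hx); split; auto. unfold H, g' in *; lia. }
    assert (IH' := IH g' f ltac:(intros x; unfold g'; specialize (Hgn x); lia) Hf Hg'
                     ltac:(intros x; unfold g'; specialize (HM x); lia) (Good_step _ _ Hgood) Hfin').
    set (a := fun k => er (mu (fun x => Lv H k x /\ (1 <= g x)%nat))).
    assert (Hterm' : forall k, (0 < k)%nat ->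
      s * psiL (fun x => f x + g x)%nat k <= s * (psiL H k + (a (k - 1)%nat - a k))).
    { intros k Hk. pose proof (Hterm f g Hgood Hf Hg Hfin k Hk) as T. cbv beta zeta in T.
      assert (E1 : (fun x => Lv (fun x => f x + (g x - 1))%nat k x \/
                     (Lv (fun x => f x + (g x - 1))%nat (k - 1) x /\ (1 <= g x)%nat)) =
                   Lv (fun x => f x + g x)%nat k).
      { apply pred_ext; intros x; unfold Lv; split.
        - intros [[H1 H2]|[[H1 H2] H3]]; split; auto; lia.
        - intros [H1 H2]. destruct (Nat.le_gt_cases 1 (g x)).
          + destruct (Nat.le_gt_cases k (f x + (g x - 1))); [left; split; auto|right; split; [split|]; auto; lia].
          + left; split; auto; lia. }
      assert (E2 : (fun x => Lv (fun x => f x + (g x - 1))%nat k x /\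
                     (Lv (fun x => f x + (g x - 1))%nat (k - 1) x /\ (1 <= g x)%nat)) =
                   (fun x => Lv H k x /\ (1 <= g x)%nat)).
      { apply pred_ext; intros x; unfold Lv, H, g'; split.
        - intros [[H1 H2] [[H3 H4] H5]]; auto.
        - intros [[H1 H2] H3]; repeat split; auto; lia. }
      rewrite E1, E2 in T. unfold psiL, a. unfold H, g' in *.
      replace (er (mu (Lv (fun x => (f x + (g x - 1))%nat) (k - 1)%nat))) with
              (er (mu (Lv (fun x => (f x + (g x - 1))%nat) (k - 1)%nat))) in T by reflexivity.
      lra. }
    assert (Tsum : s * SS (psiL (fun x => f x + g x)%nat) 0 M <=
                   s * (SS (psiL H) 0 M + (a O - a M))).
    { pose proof (SS_tele a 0 M) as TT; rewrite Nat.add_0_l in TT; rewrite <- TT. rewrite <- SS_lin, <- !SS_scal. apply SS_le.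
      intros j Hj; apply Hterm'; auto. }
    assert (HaM : a M = 0).
    { unfold a. rewrite (mu_null F mu Hmu); auto. simpl; auto.
      intros x [[_ H1] H2]. specialize (HM x). unfold H, g' in H1. lia. }
    assert (Ha0 : a O = psiL g 1).
    { unfold a, psiL. f_equal. f_equal. apply pred_ext; intros x; unfold Lv; split.
      - intros [[H1 _] H2]; auto.
      - intros [H1 H2]; repeat split; auto; lia. }
    assert (Hshift : SS (psiL g') 0 M + psiL g 1 = SS (psiL g) 0 M).
    { destruct M as [|M].
      - simpl. rewrite (psiL_zero g 1); [ring|]. intros x; specialize (HM x); lia.
      - rewrite (SS_ext (psiL g') (fun j => psiL g (S j))).
        + rewrite SS_shift. rewrite SS_last. cbn [SS].
          rewrite (psiL_zero g (1 + S M)). ring.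
          intros x; specialize (HM x); lia.
        + intros j Hj. unfold psiL, Lv, g'. f_equal. f_equal. apply pred_ext; intros x; split;
          intros [H1 H2]; split; auto; lia. }
    rewrite HaM, Ha0 in Tsum. rewrite <- Hshift.
    assert (E : s * (SS (psiL f) 0 M + (SS (psiL g') 0 M + psiL g 1)) =
                s * (SS (psiL f) 0 M + SS (psiL g') 0 M) + s * psiL g 1) by ring.
    rewrite E. unfold H in Tsum. lra.
Qed.

End IntLemma.


Lemma SS_ext_range psi psi' k M : (forall j, (k < j)%nat -> (j <= k + M)%nat -> psi j = psi' j) ->
  SS psi k M = SS psi' k M.
Proof.
  revert k; induction M as [|M IH]; intros k H; simpl; auto.
  rewrite (H (S k)) by lia. rewrite IH; auto. intros; apply H; lia.
Qed.

Lemma SS_zero k M : SS (fun _ => 0) k M = 0.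
Proof. revert k; induction M; intros; simpl; auto. rewrite IHM; ring. Qed.

Definition cmN {X : Type} (f g : X -> nat) := forall x y,
  ((g x < g y)%nat -> (f x <= f y)%nat) /\ ((f x < f y)%nat -> (g x <= g y)%nat).

Section IntApp.
Context {X : Type} (F : (X -> Prop) -> Prop) (HF : sigma_algebra F)
  (mu : (X -> Prop) -> ER) (Hmu : monotone_measure F mu) (Hs : submodular F mu)
  (A : X -> Prop) (HA : F A).

Lemma er_mono B C : F B -> F C -> (forall x, B x -> C x) -> mu C = Fin (er (mu C)) ->
  er (mu B) <= er (mu C).
Proof.
  intros HB HC H HCf. pose proof (mu_mono F mu Hmu B C HB HC H) as T.
  rewrite HCf in T. destruct (mu B); simpl in *; auto.
  contradiction.
Qed.

Lemma fin_sub f g B : finL F mu A (fun x => f x + g x)%nat -> F B ->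
  (forall x, B x -> A x /\ (1 <= f x + g x)%nat) -> mu B = Fin (er (mu B)).
Proof. intros H; apply H. Qed.

Lemma Hterm_sub : forall f g, (fun _ _ => True) f g -> mbl F f -> mbl F g ->
  finL F mu A (fun x => f x + g x)%nat ->
  forall k, (1 <= k)%nat ->
  let P := Lv A (fun x => f x + (g x - 1))%nat k in
  let Q := fun x => Lv A (fun x => f x + (g x - 1))%nat (k - 1) x /\ (1 <= g x)%nat in
  1 * (er (mu (fun x => P x \/ Q x)) + er (mu (fun x => P x /\ Q x))) <=
  1 * (er (mu P) + er (mu Q)).
Proof.
  intros f g _ Hf Hg Hfin k Hk P Q.
  assert (HH : mbl F (fun x => f x + (g x - 1))%nat) by (apply mbl_plus; auto; apply mbl_sub1; auto).
  assert (HP : F P) by (apply Lv_F; auto).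
  assert (HQ : F Q) by (apply (F_inter F HF); [apply Lv_F; auto|apply Hg]).
  assert (SP : forall x, P x -> A x /\ (1 <= f x + g x)%nat) by (intros x [H1 H2]; split; auto; lia).
  assert (SQ : forall x, Q x -> A x /\ (1 <= f x + g x)%nat) by (intros x [[H1 H2] H3]; split; auto; lia).
  pose proof (Hs P Q HP HQ) as T.
  rewrite (Hfin P), (Hfin Q), (Hfin (fun x => P x /\ Q x)), (Hfin (fun x => P x \/ Q x)) in T; auto.
  - simpl in T. lra.
  - apply (F_union F HF); auto.
  - intros x [H|H]; auto.
  - apply (F_inter F HF); auto.
  - intros x [H _]; auto.
Qed.

Lemma int_sub M f g : (forall x, (f x + g x < M)%nat) -> mbl F f -> mbl F g ->
  finL F mu A (fun x => f x + g x)%nat ->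
  SS (psiL mu A (fun x => f x + g x)%nat) 0 M <= SS (psiL mu A f) 0 M + SS (psiL mu A g) 0 M.
Proof.
  intros HM Hf Hg Hfin.
  pose proof (int_lemma F HF mu Hmu A 1 (fun _ _ => True) (fun _ _ _ => I) Hterm_sub M M g f)
    as T.
  rewrite !Rmult_1_l in T. apply T; auto. intros x; specialize (HM x); lia.
Qed.

Definition Good2 (f g : X -> nat) := modular F mu \/ cmN f g.

Lemma Good2_step f g : Good2 f g -> Good2 f (fun x => g x - 1)%nat.
Proof.
  intros [H|H]; [left; auto|right]. intros x y; specialize (H x y); split; intros; lia.
Qed.

Lemma Hterm_sup : forall f g, Good2 f g -> mbl F f -> mbl F g ->
  finL F mu A (fun x => f x + g x)%nat ->
  forall k, (1 <= k)%nat ->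
  let P := Lv A (fun x => f x + (g x - 1))%nat k in
  let Q := fun x => Lv A (fun x => f x + (g x - 1))%nat (k - 1) x /\ (1 <= g x)%nat in
  -1 * (er (mu (fun x => P x \/ Q x)) + er (mu (fun x => P x /\ Q x))) <=
  -1 * (er (mu P) + er (mu Q)).
Proof.
  intros f g Hgood Hf Hg Hfin k Hk P Q.
  assert (HH : mbl F (fun x => f x + (g x - 1))%nat) by (apply mbl_plus; auto; apply mbl_sub1; auto).
  assert (HP : F P) by (apply Lv_F; auto).
  assert (HQ : F Q) by (apply (F_inter F HF); [apply Lv_F; auto|apply Hg]).
  assert (SP : forall x, P x -> A x /\ (1 <= f x + g x)%nat) by (intros x [H1 H2]; split; auto; lia).
  assert (SQ : forall x, Q x -> A x /\ (1 <= f x + g x)%nat) by (intros x [[H1 H2] H3]; split; auto; lia).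
  assert (Eq : er (mu (fun x => P x \/ Q x)) + er (mu (fun x => P x /\ Q x)) =
               er (mu P) + er (mu Q)); [|lra].
  destruct Hgood as [Hmod|Hcm].
  - pose proof (Hmod P Q HP HQ) as T.
    rewrite (Hfin P), (Hfin Q), (Hfin (fun x => P x /\ Q x)), (Hfin (fun x => P x \/ Q x)) in T; auto.
    + simpl in T. injection T; intros; lra.
    + apply (F_union F HF); auto.
    + intros x [H|H]; auto.
    + apply (F_inter F HF); auto.
    + intros x [H _]; auto.
  - assert (Hcmp : (forall x, P x -> Q x) \/ (forall x, Q x -> P x)).
    { destruct (classic (exists y, P y /\ ~ Q y)) as [[y [Py nQy]]|Hn].
      - right. intros x Qx. destruct Py as [Ay Hy]. destruct Qx as [[Ax Hx] Hgx].
        assert (Hgy : g y = O).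
        { destruct (Nat.eq_dec (g y) O); auto. exfalso; apply nQy; split; [split; auto; lia|lia]. }
        destruct (Hcm y x) as [H1 _]. assert (f y <= f x)%nat by (apply H1; lia).
        split; auto; lia.
      - left. intros x Px. apply NNPP; intros nQ; apply Hn; eauto. }
    destruct Hcmp as [H|H].
    + rewrite (pred_ext (fun x => P x \/ Q x) Q) by (intros x; split; [intros [?|?]; auto|auto]).
      rewrite (pred_ext (fun x => P x /\ Q x) P) by (intros x; split; [intros [? ?]; auto|auto]).
      ring.
    + rewrite (pred_ext (fun x => P x \/ Q x) P) by (intros x; split; [intros [?|?]; auto|auto]).
      rewrite (pred_ext (fun x => P x /\ Q x) Q) by (intros x; split; [intros [? ?]; auto|auto]).
      ring.
Qed.

Lemma int_sup M f g : (forall x, (f x + g x < M)%nat) -> mbl F f -> mbl F g ->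
  finL F mu A (fun x => f x + g x)%nat -> Good2 f g ->
  SS (psiL mu A f) 0 M + SS (psiL mu A g) 0 M <= SS (psiL mu A (fun x => f x + g x)%nat) 0 M.
Proof.
  intros HM Hf Hg Hfin Hgood.
  pose proof (int_lemma F HF mu Hmu A (-1) Good2 Good2_step Hterm_sup M M g f)
    as T.
  assert (-1 * SS (psiL mu A (fun x => f x + g x)%nat) 0 M <=
          -1 * (SS (psiL mu A f) 0 M + SS (psiL mu A g) 0 M)); [|lra].
  apply T; auto. intros x; specialize (HM x); lia.
Qed.

End IntApp.


Section Trunc.
Context {X : Type} (F : (X -> Prop) -> Prop) (HF : sigma_algebra F)
  (mu : (X -> Prop) -> ER) (Hmu : monotone_measure F mu) (Hs : submodular F mu)
  (A : X -> Prop) (HA : F A).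

Lemma mbl_min f K : mbl F f -> mbl F (fun x => Nat.min (f x) K).
Proof.
  intros Hf j. destruct (le_lt_dec j K).
  - eapply (F_ext F); [apply (Hf j)|]. intros x; split; intros; lia.
  - eapply (F_ext F); [apply (F_empty F HF)|]. intros x; split; intros; [tauto|lia].
Qed.

Lemma psiL_eq f f' j : (forall x, (j <= f x)%nat <-> (j <= f' x)%nat) -> psiL mu A f j = psiL mu A f' j.
Proof.
  intros H; unfold psiL, Lv. f_equal; f_equal; apply pred_ext; intros x; rewrite H; tauto.
Qed.

Lemma SS_trunc f K M : (K <= M)%nat ->
  SS (psiL mu A (fun x => Nat.min (f x) K)) 0 M = SS (psiL mu A f) 0 K.
Proof.
  intros HKM. replace M with (K + (M - K))%nat by lia. rewrite SS_add.
  rewrite (SS_ext_range _ (fun _ => 0) (0 + K)).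
  - rewrite SS_zero, Rplus_0_r. apply SS_ext_range. intros j Hj1 Hj2.
    apply psiL_eq; intros x; split; intros; lia.
  - intros j Hj _. apply (psiL_zero F mu Hmu A). intros x; lia.
Qed.

Lemma finL_mono f g f' g' : finL F mu A (fun x => f x + g x)%nat ->
  (forall x, (f' x + g' x <= f x + g x)%nat) -> finL F mu A (fun x => f' x + g' x)%nat.
Proof.
  intros H Hle B HB HBs. apply H; auto. intros x Hx; destruct (HBs x Hx); split; auto.
  specialize (Hle x); lia.
Qed.

Lemma int_sub_K f g K : mbl F f -> mbl F g -> finL F mu A (fun x => f x + g x)%nat ->
  SS (psiL mu A (fun x => f x + g x)%nat) 0 K <= SS (psiL mu A f) 0 K + SS (psiL mu A g) 0 K.
Proof.
  intros Hf Hg Hfin.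
  set (f' := fun x => Nat.min (f x) K). set (g' := fun x => Nat.min (g x) K).
  set (M := S (K + K)).
  assert (E : SS (psiL mu A (fun x => f x + g x)%nat) 0 K = SS (psiL mu A (fun x => f' x + g' x)%nat) 0 K).
  { apply SS_ext_range. intros j Hj1 Hj2. apply psiL_eq. intros x; unfold f', g'; split; intros; lia. }
  rewrite E.
  assert (Hfg' : mbl F (fun x => f' x + g' x)%nat) by (apply (mbl_plus F HF); apply mbl_min; auto).
  eapply Rle_trans.
  - apply (SS_monoM _ 0 K M); [intros; apply (psiL_nonneg F HF mu Hmu A HA); auto|unfold M; lia].
  - rewrite <- (SS_trunc f K M), <- (SS_trunc g K M) by (unfold M; lia).
    apply (int_sub F HF mu Hmu Hs A HA); try apply mbl_min; auto.
    + intros x; unfold M; lia.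
    + apply (finL_mono f g); auto. intros x; lia.
Qed.

Lemma int_sup_K f g K : mbl F f -> mbl F g -> finL F mu A (fun x => f x + g x)%nat ->
  (modular F mu \/ cmN f g) ->
  SS (psiL mu A f) 0 K + SS (psiL mu A g) 0 K <= SS (psiL mu A (fun x => f x + g x)%nat) 0 (S (K + K)).
Proof.
  intros Hf Hg Hfin Hgood.
  set (f' := fun x => Nat.min (f x) K). set (g' := fun x => Nat.min (g x) K).
  set (M := S (K + K)).
  rewrite <- (SS_trunc f K M), <- (SS_trunc g K M) by (unfold M; lia).
  assert (Hfin' : finL F mu A (fun x => f' x + g' x)%nat) by (apply (finL_mono f g); auto; intros; unfold f', g'; lia).
  eapply Rle_trans.
  - apply (int_sup F HF mu Hmu A HA M f' g'); try apply mbl_min; auto.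
    + intros x; unfold M, f', g'; lia.
    + destruct Hgood as [H|H]; [left; auto|right].
      intros x y; specialize (H x y); unfold f', g'; split; intros; lia.
  - apply SS_le. intros j Hj. unfold psiL.
    apply (er_mono F mu Hmu); auto.
    + apply (Lv_F F HF A HA); auto. apply (mbl_plus F HF); apply mbl_min; auto.
    + apply (Lv_F F HF A HA); auto. apply (mbl_plus F HF); auto.
    + intros x [Ha Hx]; split; auto; unfold f', g' in *; lia.
    + apply Hfin. apply (Lv_F F HF A HA); auto. apply (mbl_plus F HF); auto.
      intros x [Ha Hx]; split; auto; lia.
Qed.

End Trunc.


Fixpoint gridl (d : R) (k M : nat) : list R :=
  match M with O => nil | S M' => INR (S k) * d :: gridl d (S k) M' end.

Lemma gridl_incr d k M : 0 < d -> incr_from (INR k * d) (gridl d k M).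
Proof.
  intros Hd; revert k; induction M as [|M IH]; intros k; cbn [gridl incr_from]; auto.
  split; auto. rewrite S_INR. lra.
Qed.

Lemma lsR_gridl phi d k M : lsR phi (INR k * d) (gridl d k M) = d * SS (fun j => phi (INR j * d)) k M.
Proof.
  revert k; induction M as [|M IH]; intros k; cbn [gridl lsR SS]; [ring|].
  rewrite IH. rewrite S_INR. ring.
Qed.

Lemma lsR_gridl0 phi d M : lsR phi 0 (gridl d 0 M) = d * SS (fun j => phi (INR j * d)) 0 M.
Proof. pose proof (lsR_gridl phi d 0 M) as H. change (INR 0) with 0 in H. rewrite Rmult_0_l in H. exact H. Qed.

Lemma gridl_incr0 d M : 0 < d -> incr_from 0 (gridl d 0 M).
Proof. intros Hd. pose proof (gridl_incr d 0 M Hd) as H. change (INR 0) with 0 in H. rewrite Rmult_0_l in H. exact H. Qed.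

Lemma sumR_nonneg phi prev l : 0 <= prev -> incr_from prev l -> (forall t, 0 < t -> 0 <= phi t) ->
  0 <= sumR phi l.
Proof.
  revert prev; induction l as [|t l IH]; intros prev Hp Hl H; simpl; [lra|].
  destruct Hl as [H1 H2]. pose proof (H t ltac:(lra)). pose proof (IH t ltac:(lra) H2 H). lra.
Qed.

Lemma eps_le a b c : 0 <= c -> (forall d, 0 < d -> a <= b + d * c) -> a <= b.
Proof.
  intros Hc H. apply Rnot_lt_le; intros Hab.
  set (d := (a - b) / (c + 1)).
  assert (Hd : 0 < d) by (unfold d; apply Rdiv_lt_0_compat; lra).
  specialize (H d Hd).
  assert (d * c < a - b).
  { unfold d. apply (Rmult_lt_reg_r (c + 1)); [lra|].
    field_simplify; [|lra]. nra. }
  lra.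
Qed.

Lemma fl_mono r r' : 0 <= r -> r <= r' -> (fl r <= fl r')%nat.
Proof. intros H1 H2. apply fl_le; [lra|]. destruct (fl_spec r H1); lra. Qed.

Section Add.
Context {X : Type} (F : (X -> Prop) -> Prop) (HF : sigma_algebra F)
  (mu : (X -> Prop) -> ER) (Hmu : monotone_measure F mu) (Hs : submodular F mu)
  (A : X -> Prop) (HA : F A).

Definition lvl (u : X -> R) t := fun x => A x /\ t <= u x.
Definition CI (u : X -> R) := choquet mu A (fun x => Fin (u x)).

Lemma CI_eq u : CI u = int_0_inf (fun t => mu (lvl u t)).
Proof. reflexivity. Qed.

Lemma lvl_F u t : measurable_fun F u -> F (lvl u t).
Proof. intros Hu; apply (F_inter F HF); auto. Qed.

Definition Fd (u : X -> R) d := fun x => fl (u x / d).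

Lemma Fd_le u d k x : 0 < d -> 0 <= u x -> ((k <= Fd u d x)%nat <-> INR k * d <= u x).
Proof.
  intros Hd Hu. unfold Fd. rewrite fl_le.
  - split; intros H.
    + apply (Rmult_le_compat_r d) in H; [|lra]. field_simplify in H; lra.
    + apply (Rmult_le_reg_r d); auto. field_simplify; lra.
  - apply Rmult_le_pos; [lra|left; apply Rinv_0_lt_compat; lra].
Qed.

Lemma Fd_gt u d x : 0 < d -> 0 <= u x -> u x / d - 1 < INR (Fd u d x).
Proof.
  intros Hd Hu; unfold Fd; apply fl_gt. apply Rmult_le_pos; [lra|left; apply Rinv_0_lt_compat; lra].
Qed.

Lemma Fd_mbl u d : 0 < d -> measurable_fun F u -> (forall x, 0 <= u x) -> mbl F (Fd u d).
Proof.
  intros Hd Hu Hu0 k. eapply (F_ext F); [apply (Hu (INR k * d))|].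
  intros x; rewrite Fd_le; auto; tauto.
Qed.

Lemma psiL_Fd u d j : 0 < d -> (forall x, 0 <= u x) -> psiL mu A (Fd u d) j = er (mu (lvl u (INR j * d))).
Proof.
  intros Hd Hu0. unfold psiL, Lv, lvl. f_equal; f_equal; apply pred_ext; intros x.
  rewrite Fd_le; auto; tauto.
Qed.

Lemma lvl_fin u U t : 0 < t -> CI u = Fin U -> mu (lvl u t) = Fin (er (mu (lvl u t))).
Proof.
  intros Ht HU. pose proof (choquet_single mu A u t Ht) as T. fold (CI u) in T. rewrite HU in T.
  destruct (mu (lvl u t)) eqn:E; simpl; auto.
  unfold lvl in E. rewrite E in T. simpl in T. destruct (Req_EM_T t 0); [lra|]. simpl in T. contradiction.
Qed.

Lemma grid_le u U d M : 0 < d -> CI u = Fin U ->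
  d * SS (fun j => er (mu (lvl u (INR j * d)))) 0 M <= U.
Proof.
  intros Hd HU.
  assert (T := int_le (fun t => mu (lvl u t)) (gridl d 0 M)).
  rewrite <- CI_eq, HU in T.
  assert (Hi : incr_from 0 (gridl d 0 M)) by (apply gridl_incr0; auto).
  specialize (T Hi).
  rewrite (lower_sum_fin _ 0 (gridl d 0 M)) in T; [|lra|auto|].
  - simpl in T. rewrite lsR_gridl0 in T. exact T.
  - intros t Ht. apply (lvl_fin u U); auto.
Qed.

Lemma lvl_mono u v t : measurable_fun F u -> measurable_fun F v ->
  (forall x, u x <= v x) -> ERle (mu (lvl u t)) (mu (lvl v t)).
Proof.
  intros Hu Hv H. apply (mu_mono F mu Hmu); try apply lvl_F; auto.
  intros x [Ha Hx]; split; auto. specialize (H x); lra.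
Qed.

Lemma lvl_sum_fin u v U V t : measurable_fun F u -> measurable_fun F v ->
  (forall x, 0 <= u x) -> (forall x, 0 <= v x) -> 0 < t ->
  CI u = Fin U -> CI v = Fin V ->
  mu (lvl (fun x => u x + v x) t) = Fin (er (mu (lvl (fun x => u x + v x) t))).
Proof.
  intros Hu Hv Hu0 Hv0 Ht HU HV.
  assert (T : ERle (mu (lvl (fun x => u x + v x) t))
                   (ERadd (mu (lvl u (t/2))) (mu (lvl v (t/2))))).
  { eapply ERle_trans; [|apply (mu_subadd F HF mu Hmu Hs); apply lvl_F; auto].
    apply (mu_mono F mu Hmu).
    - apply lvl_F; apply (mble_plus F HF); auto.
    - apply (F_union F HF); apply lvl_F; auto.
    - intros x [Ha Hx]. destruct (Rle_dec (t/2) (u x)); [left; split; auto|right; split; auto; lra]. }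
  rewrite (lvl_fin u U), (lvl_fin v V) in T by (auto; lra).
  simpl in T. eapply er_fin; eauto.
Qed.

Theorem choquet_subadd (u v : X -> R) : measurable_fun F u -> measurable_fun F v ->
  (forall x, 0 <= u x) -> (forall x, 0 <= v x) ->
  ERle (CI (fun x => u x + v x)) (ERadd (CI u) (CI v)).
Proof.
  intros Hu Hv Hu0 Hv0.
  destruct (CI u) as [U|] eqn:HU; [|destruct (CI (fun x => u x + v x)); simpl; auto].
  destruct (CI v) as [V|] eqn:HV; [|destruct (CI (fun x => u x + v x)); simpl; auto].
  simpl. rewrite CI_eq. apply int_ub. intros l Hl.
  set (w := fun x => u x + v x).
  assert (Hw : measurable_fun F w) by (apply (mble_plus F HF); auto).
  assert (Hwf : forall t, 0 < t -> mu (lvl w t) = Fin (er (mu (lvl w t)))).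
  { intros t Ht; apply (lvl_sum_fin u v U V); auto. }
  rewrite (lower_sum_fin _ 0 l) by (auto; lra). simpl.
  set (phi := fun t => er (mu (lvl w t))).
  assert (Hphi0 : forall t, 0 < t -> 0 <= phi t) by (intros; apply (er_nonneg F HF mu Hmu), lvl_F; auto).
  assert (HE : 0 <= sumR phi l).
  { apply (sumR_nonneg phi 0 l); auto; lra. }
  assert (Key : forall d, 0 < d -> lsR phi 0 l <= U + V + d * 3 * sumR phi l).
  { intros d Hd.
    set (f1 := Fd u d). set (g1 := Fd v d).
    assert (Hf1 : mbl F f1) by (apply Fd_mbl; auto).
    assert (Hg1 : mbl F g1) by (apply Fd_mbl; auto).
    assert (Hfin : finL F mu A (fun x => f1 x + g1 x)%nat).
    { intros B HB HBs. apply (er_fin _ (er (mu (lvl w d)))). rewrite <- Hwf by auto.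
      apply (mu_mono F mu Hmu); auto; [apply lvl_F; auto|].
      intros x Hx; destruct (HBs x Hx) as [Ha H1]; split; auto.
      assert (E1 : INR (f1 x) <= u x / d).
      { apply (Rmult_le_reg_r d); auto. unfold Rdiv; rewrite Rmult_assoc, Rinv_l, Rmult_1_r by lra.
        apply Fd_le; auto. }
      assert (E2 : INR (g1 x) <= v x / d).
      { apply (Rmult_le_reg_r d); auto. unfold Rdiv; rewrite Rmult_assoc, Rinv_l, Rmult_1_r by lra.
        apply Fd_le; auto. }
      apply le_INR in H1; rewrite plus_INR in H1; simpl in H1.
      unfold w. apply (Rmult_le_reg_r (/ d)); [apply Rinv_0_lt_compat; lra|].
      rewrite Rinv_r by lra. unfold Rdiv in *. lra. }
    destruct (grid_bound phi (psiL mu A (fun x => f1 x + g1 x)%nat) d 2 Hd ltac:(lra) Hphi0)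
      with (l := l) (prev := 0) (m := O) as [D HD]; auto; try lra.
    - intros t j Ht Hj Hjt. unfold phi, psiL.
      apply (er_mono F mu Hmu); [apply lvl_F; auto|apply (Lv_F F HF A HA); apply (mbl_plus F HF); auto| |].
      + intros x [Ha Hx]; split; auto.
        pose proof (Fd_gt u d x Hd (Hu0 x)). pose proof (Fd_gt v d x Hd (Hv0 x)).
        fold f1 g1 in H, H0.
        assert (INR j < INR (f1 x + g1 x)).
        { rewrite plus_INR. unfold w in Hx.
          assert (t / d <= (u x + v x) / d) by (apply Rmult_le_compat_r; [left; apply Rinv_0_lt_compat|]; lra).
          unfold Rdiv in *. lra. }
        apply INR_lt in H1; lia.
      + apply Hfin; [apply (Lv_F F HF A HA); apply (mbl_plus F HF); auto|].
        intros x [Ha Hx]; split; auto; lia.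
    - unfold Rdiv; rewrite Rmult_0_l. simpl. apply Rmax_l.
    - pose proof (int_sub_K F HF mu Hmu Hs A HA f1 g1 D Hf1 Hg1 Hfin) as T.
      rewrite (SS_ext (psiL mu A f1) (fun j => er (mu (lvl u (INR j * d))))) in T by (intros; apply psiL_Fd; auto).
      rewrite (SS_ext (psiL mu A g1) (fun j => er (mu (lvl v (INR j * d))))) in T by (intros; apply psiL_Fd; auto).
      pose proof (grid_le u U d D Hd HU). pose proof (grid_le v V d D Hd HV).
      apply (Rmult_le_compat_l d) in T; [|lra]. lra. }
  apply (eps_le _ _ (3 * sumR phi l)); [lra|].
  intros d Hd; specialize (Key d Hd). fold phi. lra.
Qed.

End Add.


Section Sup.
Context {X : Type} (F : (X -> Prop) -> Prop) (HF : sigma_algebra F)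
  (mu : (X -> Prop) -> ER) (Hmu : monotone_measure F mu) (Hs : submodular F mu)
  (A : X -> Prop) (HA : F A).

Lemma div_nonneg r d : 0 <= r -> 0 < d -> 0 <= r / d.
Proof. intros; apply Rmult_le_pos; [lra|left; apply Rinv_0_lt_compat; lra]. Qed.

Lemma cmN_Fd (u v : X -> R) d : 0 < d -> (forall x, 0 <= u x) -> (forall x, 0 <= v x) ->
  comonotone u v -> cmN (Fd u d) (Fd v d).
Proof.
  intros Hd Hu0 Hv0 Hc x y. unfold Fd. specialize (Hc x y). split; intros H.
  - assert (v x < v y).
    { apply Rnot_le_lt; intros Hle. assert (fl (v y / d) <= fl (v x / d))%nat; [|lia].
      apply fl_mono; [apply div_nonneg; auto|]. apply Rmult_le_compat_r; [left; apply Rinv_0_lt_compat|]; lra. }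
    apply fl_mono; [apply div_nonneg; auto|]. apply Rmult_le_compat_r; [left; apply Rinv_0_lt_compat; lra|].
    nra.
  - assert (u x < u y).
    { apply Rnot_le_lt; intros Hle. assert (fl (u y / d) <= fl (u x / d))%nat; [|lia].
      apply fl_mono; [apply div_nonneg; auto|]. apply Rmult_le_compat_r; [left; apply Rinv_0_lt_compat|]; lra. }
    apply fl_mono; [apply div_nonneg; auto|]. apply Rmult_le_compat_r; [left; apply Rinv_0_lt_compat; lra|].
    nra.
Qed.

Theorem choquet_superadd (u v : X -> R) : measurable_fun F u -> measurable_fun F v ->
  (forall x, 0 <= u x) -> (forall x, 0 <= v x) ->
  (modular F mu \/ comonotone u v) ->
  ERle (ERadd (CI mu A u) (CI mu A v)) (CI mu A (fun x => u x + v x)).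
Proof.
  intros Hu Hv Hu0 Hv0 Hgood.
  set (w := fun x => u x + v x).
  assert (Hw : measurable_fun F w) by (apply (mble_plus F HF); auto).
  destruct (CI mu A w) as [W|] eqn:HW; [|apply ERle_Inf].
  assert (Hle : forall z, measurable_fun F z -> (forall x, z x <= w x) -> CI mu A z = Fin (er (CI mu A z))).
  { intros z Hz Hzw. apply (er_fin _ W). rewrite <- HW. unfold CI.
    apply (choquet_mono F mu Hmu); intros; [apply (lvl_F F HF A HA); auto|apply (lvl_F F HF A HA); auto|].
    simpl; auto. }
  assert (HU := Hle u Hu ltac:(intros; unfold w; specialize (Hv0 x); lra)).
  assert (HV := Hle v Hv ltac:(intros; unfold w; specialize (Hu0 x); lra)).
  set (U := er (CI mu A u)) in *. set (V := er (CI mu A v)) in *.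
  rewrite HU, HV. simpl.
  set (phu := fun t => er (mu (lvl A u t))). set (phv := fun t => er (mu (lvl A v t))).
  assert (Hfu : forall t, 0 < t -> mu (lvl A u t) = Fin (phu t)) by (intros; apply (lvl_fin mu A u U); auto).
  assert (Hfv : forall t, 0 < t -> mu (lvl A v t) = Fin (phv t)) by (intros; apply (lvl_fin mu A v V); auto).
  assert (Hfw : forall t, 0 < t -> mu (lvl A w t) = Fin (er (mu (lvl A w t)))) by (intros; apply (lvl_fin mu A w W); auto).
  assert (Claim : forall l1 l2, incr_from 0 l1 -> incr_from 0 l2 -> lsR phu 0 l1 + lsR phv 0 l2 <= W).
  { intros l1 l2 Hl1 Hl2.
    assert (Hp1 : forall t, 0 < t -> 0 <= phu t) by (intros; apply (er_nonneg F HF mu Hmu), (lvl_F F HF A HA); auto).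
    assert (Hp2 : forall t, 0 < t -> 0 <= phv t) by (intros; apply (er_nonneg F HF mu Hmu), (lvl_F F HF A HA); auto).
    assert (HE1 := sumR_nonneg phu 0 l1 ltac:(lra) Hl1 Hp1).
    assert (HE2 := sumR_nonneg phv 0 l2 ltac:(lra) Hl2 Hp2).
    apply (eps_le _ _ (sumR phu l1 + sumR phv l2)); [lra|].
    intros d Hd.
    set (f1 := Fd u d). set (g1 := Fd v d).
    assert (Hf1 : mbl F f1) by (apply (Fd_mbl F); auto).
    assert (Hg1 : mbl F g1) by (apply (Fd_mbl F); auto).
    assert (Hfin : finL F mu A (fun x => f1 x + g1 x)%nat).
    { intros B HB HBs. apply (er_fin _ (er (mu (lvl A w d)))). rewrite <- Hfw by auto.
      apply (mu_mono F mu Hmu); auto; [apply (lvl_F F HF A HA); auto|].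
      intros x Hx; destruct (HBs x Hx) as [Ha H1]; split; auto.
      assert (E1 : INR (f1 x) * d <= u x) by (apply Fd_le; auto).
      assert (E2 : INR (g1 x) * d <= v x) by (apply Fd_le; auto).
      apply le_INR in H1; rewrite plus_INR in H1; simpl in H1.
      unfold w. nra. }
    assert (Hgr : forall (z : X -> R) (Z : R) (ph : R -> R) l,
       measurable_fun F z -> (forall x, 0 <= z x) -> CI mu A z = Fin Z ->
       ph = (fun t => er (mu (lvl A z t))) -> incr_from 0 l ->
       exists D, lsR ph 0 l <= d * SS (psiL mu A (Fd z d)) 0 D + d * (1 + 0) * sumR ph l).
    { intros z Z ph l Hz Hz0 HZ Eph Hl. subst ph.
      apply (grid_bound _ _ d 0 Hd ltac:(lra)); auto; try lra.
      - intros; apply (er_nonneg F HF mu Hmu), (lvl_F F HF A HA); auto.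
      - intros t j Ht Hj Hjt. rewrite (psiL_Fd mu A) by auto.
        assert (Hjd : 0 < INR j * d) by (apply Rmult_lt_0_compat; auto; apply lt_0_INR; lia).
        apply (er_mono F mu Hmu); try apply (lvl_F F HF A HA); auto.
        + intros x [Ha Hx]; split; auto.
          assert (INR j * d <= t) by (apply (Rmult_le_compat_r d) in Hjt; [|lra]; field_simplify in Hjt; lra). lra.
        + apply (lvl_fin mu A z Z); auto.
      - unfold Rdiv; rewrite Rmult_0_l, Rminus_0_r, Rmax_left by lra. simpl; lra. }
    destruct (Hgr u U phu l1 Hu Hu0 HU eq_refl Hl1) as [D1 HD1].
    destruct (Hgr v V phv l2 Hv Hv0 HV eq_refl Hl2) as [D2 HD2].
    set (K := Nat.max D1 D2).
    assert (M1 : SS (psiL mu A f1) 0 D1 <= SS (psiL mu A f1) 0 K)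
      by (apply SS_monoM; [intros; apply (psiL_nonneg F HF mu Hmu A HA); auto|unfold K; lia]).
    assert (M2 : SS (psiL mu A g1) 0 D2 <= SS (psiL mu A g1) 0 K)
      by (apply SS_monoM; [intros; apply (psiL_nonneg F HF mu Hmu A HA); auto|unfold K; lia]).
    assert (Hg2 : modular F mu \/ cmN f1 g1).
    { destruct Hgood as [H|H]; [left; auto|right; apply cmN_Fd; auto]. }
    pose proof (int_sup_K F HF mu Hmu A HA f1 g1 K Hf1 Hg1 Hfin Hg2) as T.
    assert (T2 : SS (psiL mu A (fun x => f1 x + g1 x)%nat) 0 (S (K + K)) <=
                 SS (fun j => er (mu (lvl A w (INR j * d)))) 0 (S (K + K))).
    { apply SS_le. intros j Hj. unfold psiL.
      assert (Hjd : 0 < INR j * d) by (apply Rmult_lt_0_compat; auto; apply lt_0_INR; lia).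
      apply (er_mono F mu Hmu); [apply (Lv_F F HF A HA); apply (mbl_plus F HF); auto|apply (lvl_F F HF A HA); auto| |auto].
      intros x [Ha Hx]; split; auto.
      assert (E1 : INR (f1 x) * d <= u x) by (apply Fd_le; auto).
      assert (E2 : INR (g1 x) * d <= v x) by (apply Fd_le; auto).
      apply le_INR in Hx; rewrite plus_INR in Hx.
      unfold w. nra. }
    pose proof (grid_le mu A w W d (S (K + K)) Hd HW) as T3.
    assert (Hd0 : 0 <= d) by lra.
    apply (Rmult_le_compat_l d) in M1; auto. apply (Rmult_le_compat_l d) in M2; auto.
    apply (Rmult_le_compat_l d) in T; auto. apply (Rmult_le_compat_l d) in T2; auto.
    fold f1 in HD1; fold g1 in HD2. lra. }
  assert (S1 : forall l2, incr_from 0 l2 -> U <= W - lsR phv 0 l2).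
  { intros l2 Hl2.
    assert (T : ERle (CI mu A u) (Fin (W - lsR phv 0 l2))).
    { rewrite CI_eq. apply int_ub. intros l1 Hl1.
      rewrite (lower_sum_fin _ 0 l1) by (auto; lra). simpl.
      pose proof (Claim l1 l2 Hl1 Hl2). unfold phu in H. lra. }
    rewrite HU in T. exact T. }
  assert (T : ERle (CI mu A v) (Fin (W - U))).
  { rewrite CI_eq. apply int_ub. intros l2 Hl2.
    rewrite (lower_sum_fin _ 0 l2) by (auto; lra). simpl.
    pose proof (S1 l2 Hl2). unfold phv in H. lra. }
  rewrite HV in T. simpl in T. lra.
Qed.
End Sup.


Lemma exp_convex th L1 L2 : 0 <= th <= 1 ->
  exp (th * L1 + (1 - th) * L2) <= th * exp L1 + (1 - th) * exp L2.
Proof.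
  intros Hth. set (m := th * L1 + (1 - th) * L2).
  assert (H1 : exp m * (1 + (L1 - m)) <= exp L1).
  { replace (exp L1) with (exp m * exp (L1 - m)) by (rewrite <- exp_plus; f_equal; ring).
    apply Rmult_le_compat_l; [left; apply exp_pos|apply exp_ineq1_le]. }
  assert (H2 : exp m * (1 + (L2 - m)) <= exp L2).
  { replace (exp L2) with (exp m * exp (L2 - m)) by (rewrite <- exp_plus; f_equal; ring).
    apply Rmult_le_compat_l; [left; apply exp_pos|apply exp_ineq1_le]. }
  assert (E : th * (exp m * (1 + (L1 - m))) + (1 - th) * (exp m * (1 + (L2 - m))) = exp m)
    by (unfold m; ring).
  nra.
Qed.

Lemma young s W fx p q : 1 < p -> / p + / q = 1 -> 0 < s -> 0 < W -> 0 <= fx ->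
  fx <= s / p * (W * powR fx p) + Rpower s (1 - q) / q * / Rpower W (q - 1).
Proof.
  intros Hp Hpq Hs HW Hf.
  assert (Hip : 0 < / p) by (apply Rinv_0_lt_compat; lra).
  assert (Hip1 : / p < 1) by (rewrite <- Rinv_1; apply Rinv_lt_contravar; lra).
  assert (Hiq : 0 < / q) by lra.
  assert (Hq : 0 < q) by (apply Rinv_0_lt_compat in Hiq; rewrite Rinv_inv in Hiq; auto).
  assert (HB0 : 0 < Rpower s (1 - q) * / Rpower W (q - 1))
    by (apply Rmult_lt_0_compat; [apply Rpower_pos|apply Rinv_0_lt_compat, Rpower_pos]).
  destruct Hf as [Hf|Hf].
  2:{ subst. rewrite powR_0 by lra. rewrite Rmult_0_r, Rmult_0_r, Rplus_0_l.
      unfold Rdiv. rewrite Rmult_assoc. apply Rmult_le_pos; [left; apply Rpower_pos|].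
      apply Rmult_le_pos; [lra|left; apply Rinv_0_lt_compat, Rpower_pos]. }
  rewrite powR_pos by auto.
  set (A := s * (W * Rpower fx p)). set (B := Rpower s (1 - q) * / Rpower W (q - 1)).
  assert (HA : 0 < A) by (unfold A; repeat apply Rmult_lt_0_compat; auto; apply Rpower_pos).
  pose proof (exp_convex (/ p) (ln A) (ln B) ltac:(lra)) as T.
  rewrite !exp_ln in T by auto.
  replace (1 - / p) with (/ q) in T by lra.
  assert (Eln : / p * ln A + / q * ln B = ln fx).
  { unfold A, B. rewrite !ln_mult by (try apply Rmult_lt_0_compat; auto; try apply Rpower_pos;
       apply Rinv_0_lt_compat, Rpower_pos).
    rewrite ln_Rinv by apply Rpower_pos. rewrite !ln_Rpower.
    assert (E1 : / q * (1 - q) = - / p).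
    { rewrite Rmult_minus_distr_l, Rinv_l by lra. lra. }
    assert (E2 : / p * p = 1) by (field; lra).
    assert (E3 : / q * (q - 1) = / p) by (replace (q - 1) with (- (1 - q)) by ring; rewrite Ropp_mult_distr_r_reverse, E1; ring).
    match goal with |- ?L = _ => replace L with
      (/ p * ln s + / p * ln W + (/ p * p) * ln fx + (/ q * (1 - q)) * ln s
                  - (/ q * (q - 1)) * ln W) by ring end.
    rewrite E1, E2, E3. ring. }
  rewrite Eln, exp_ln in T by auto.
  unfold A, B in T. unfold Rdiv. lra.
Qed.

Lemma RP_div a b y : 0 < a -> 0 < b -> Rpower (b / a) y = Rpower b y * Rpower a (- y).
Proof.
  intros Ha Hb. unfold Rdiv. rewrite <- Rpower_mult_distr by (auto; apply Rinv_0_lt_compat; auto).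
  f_equal. unfold Rpower. rewrite ln_Rinv by auto. f_equal. ring.
Qed.

Lemma RP_inv a y : 0 < a -> / Rpower a y = Rpower a (- y).
Proof. intros; rewrite Rpower_Ropp; auto. Qed.

Lemma opt_value al be p q : 1 < p -> / p + / q = 1 -> 0 < al -> 0 < be ->
  let s := Rpower (be / al) (/ q) in
  s / p * al + Rpower s (1 - q) / q * be = Rpower al (/ p) * Rpower be (/ q).
Proof.
  intros Hp Hpq Ha Hb s.
  assert (Hip : 0 < / p) by (apply Rinv_0_lt_compat; lra).
  assert (Hip1 : / p < 1) by (rewrite <- Rinv_1; apply Rinv_lt_contravar; lra).
  assert (Hiq : 0 < / q) by lra.
  assert (Hq : q <> 0) by (intro; subst; rewrite Rinv_0 in Hiq; lra).
  assert (E1 : s * al = Rpower al (/ p) * Rpower be (/ q)).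
  { unfold s. rewrite RP_div by auto.
    replace (Rpower be (/ q) * Rpower al (- / q) * al) with (Rpower be (/ q) * (Rpower al 1 * Rpower al (- / q)))
      by (rewrite Rpower_1 by auto; ring).
    rewrite <- Rpower_plus.
    replace (1 + - / q) with (/ p) by lra. ring. }
  assert (E2 : Rpower s (1 - q) * be = Rpower al (/ p) * Rpower be (/ q)).
  { unfold s. rewrite Rpower_mult. replace (/ q * (1 - q)) with (- / p).
    2:{ rewrite Rmult_minus_distr_l, Rinv_l by auto. lra. }
    rewrite RP_div by auto. rewrite Ropp_involutive.
    replace (Rpower be (- / p) * Rpower al (/ p) * be) with (Rpower al (/ p) * (Rpower be (- / p) * Rpower be 1))
      by (rewrite (Rpower_1 be) by auto; ring).
    rewrite <- Rpower_plus.
    replace (- / p + 1) with (/ q) by lra. ring. }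
  unfold Rdiv. 
  replace (s * / p * al + Rpower s (1 - q) * / q * be) with (/ p * (s * al) + / q * (Rpower s (1 - q) * be)) by ring.
  rewrite E1, E2. rewrite <- Rmult_plus_distr_r, Hpq. ring.
Qed.

Lemma eq_solve W fx g p q : 1 < p -> / p + / q = 1 -> 0 < W -> 0 < fx -> 0 < g ->
  Rpower W q * Rpower fx p = g -> fx = Rpower g (/ p) * / Rpower W (q - 1).
Proof.
  intros Hp Hpq HW Hf Hg E.
  assert (Hip : 0 < / p) by (apply Rinv_0_lt_compat; lra).
  apply ln_inv; auto.
  - apply Rmult_lt_0_compat; [apply Rpower_pos|apply Rinv_0_lt_compat, Rpower_pos].
  - rewrite ln_mult by (try apply Rpower_pos; apply Rinv_0_lt_compat, Rpower_pos).
    rewrite ln_Rinv by apply Rpower_pos. rewrite !ln_Rpower.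
    rewrite <- E. rewrite ln_mult by apply Rpower_pos. rewrite !ln_Rpower.
    assert (E2 : / p * p = 1) by (field; lra).
    assert (E3 : / p * q = q - 1).
    { replace (/ p) with (1 - / q) by lra. rewrite Rmult_minus_distr_r, Rinv_l; [ring|].
      intro; subst; rewrite Rinv_0 in Hpq. assert (/ p < 1) by (rewrite <- Rinv_1; apply Rinv_lt_contravar; lra). lra. }
    match goal with |- _ = ?R => replace R with ((/ p * q) * ln W + (/ p * p) * ln fx - (q - 1) * ln W) by ring end.
    rewrite E2, E3; ring.
Qed.

Lemma W_fp W fx g q : 0 < W -> Rpower W q * fx = g -> W * fx = g * / Rpower W (q - 1).
Proof.
  intros HW E. rewrite <- E.
  replace q with (1 + (q - 1)) at 1 by ring. rewrite Rpower_plus, Rpower_1 by auto.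
  field. apply Rgt_not_eq, Rpower_pos.
Qed.

Lemma final_ineq al g be p q : 1 < p -> / p + / q = 1 -> 0 < al -> 0 < be -> al <= g * be ->
  Rpower al (/ p) * Rpower be (/ q) <= Rpower g (/ p) * be.
Proof.
  intros Hp Hpq Ha Hb H.
  assert (Hip : 0 < / p) by (apply Rinv_0_lt_compat; lra).
  assert (Hg : 0 < g).
  { destruct (Rle_dec g 0); auto; [|lra]. assert (g * be <= 0) by nra. lra. }
  apply Rle_trans with (Rpower (g * be) (/ p) * Rpower be (/ q)).
  - apply Rmult_le_compat_r; [left; apply Rpower_pos|]. apply Rle_Rpower_l; lra.
  - rewrite <- Rpower_mult_distr by auto. rewrite Rmult_assoc, <- Rpower_plus, Hpq, Rpower_1 by auto. lra.
Qed.


Lemma lower_sum_zero prev l : lower_sum (fun _ => Fin 0) prev l = Fin 0.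
Proof. revert prev; induction l; intros; simpl; auto. rewrite IHl; simpl; f_equal; ring. Qed.

Lemma int_zero_le phi : (forall t, 0 < t -> ERle (phi t) (Fin 0)) -> ERle (int_0_inf phi) (Fin 0).
Proof.
  intros H. eapply ERle_trans; [apply (int_mono phi (fun _ => Fin 0)); auto|].
  apply int_ub; intros l Hl; rewrite lower_sum_zero; simpl; lra.
Qed.

Lemma ERmulR_Inf c : 0 < c -> ERmulR c Inf = Inf.
Proof. intros; simpl; destruct (Req_EM_T c 0); auto; lra. Qed.

Lemma inv_level t W e : 0 < t -> 0 < W -> 0 < e ->
  (t <= / Rpower W e <-> W <= Rpower (/ t) (/ e)).
Proof.
  intros Ht HW He. assert (HR := Rpower_pos W e).
  assert (Hit : 0 < / t) by (apply Rinv_0_lt_compat; auto).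
  rewrite (Rpower_le_iff W (Rpower (/ t) (/ e)) e) by (auto; apply Rpower_pos).
  rewrite Rpower_mult, Rinv_l, Rpower_1 by (auto; lra).
  split; intros H.
  - rewrite <- (Rinv_inv (Rpower W e)). apply Rinv_le_contravar; auto.
  - rewrite <- (Rinv_inv t). apply Rinv_le_contravar; auto.
Qed.

Lemma ERle_Fin_inv x y : ERle (Fin x) (Fin y) -> x <= y.
Proof. simpl; auto. Qed.


Theorem mainTheorem7 (X : Type) (F : (X -> Prop) -> Prop)
  (mu : (X -> Prop) -> ER) (A : X -> Prop) (p q : R) (f g h : X -> R) (a b : R) :
  sigma_algebra F -> monotone_measure F mu -> submodular F mu -> F A ->
  1 < p -> / p + / q = 1 ->
  measurable_fun F f -> measurable_fun F g -> measurable_fun F h ->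
  (forall x, 0 <= f x) -> (forall x, 0 <= g x) -> (forall x, 0 <= h x) ->
  choquet mu A (fun x => Fin (g x * powR (f x) p)) = Fin a -> 0 < a ->
  choquet mu A (fun x => Fin (h x * powR (f x) p)) = Fin b -> 0 < b ->
  ERle (choquet mu A (fun x => Fin (f x)))
       (ERmulR (powR 2 (/ p)) (Hpq mu A p q g h a b)) /\
  ((exists gamma, 0 <= gamma /\
      forall x, powR (b * g x + a * h x) q * powR (f x) p = gamma) ->
   (modular F mu \/
    comonotone (fun x => g x * powR (f x) p) (fun x => h x * powR (f x) p)) ->
   choquet mu A (fun x => Fin (f x))
   = ERmulR (powR 2 (/ p)) (Hpq mu A p q g h a b)).
Proof.
  intros HF Hmu Hs HA Hp HPQ Hf Hg Hh Hf0 Hg0 Hh0 Ha Ha0 Hb Hb0.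
  assert (Hip : 0 < / p) by (apply Rinv_0_lt_compat; lra).
  assert (Hip1 : / p < 1) by (rewrite <- Rinv_1; apply Rinv_lt_contravar; lra).
  assert (Hiq : 0 < / q) by lra.
  assert (Hq0 : 0 < q) by (apply Rinv_0_lt_compat in Hiq; rewrite Rinv_inv in Hiq; auto).
  assert (Hq1 : 1 < q).
  { assert (/ q < 1) by lra. apply Rnot_le_lt; intros Hle.
    assert (/ 1 <= / q) by (apply Rinv_le_contravar; lra). rewrite Rinv_1 in H0; lra. }
  assert (He : 0 < q - 1) by lra.
  unfold Hpq.
  set (gp := fun x => g x * powR (f x) p).
  set (hp := fun x => h x * powR (f x) p).
  set (w := fun x => b * g x + a * h x).
  assert (Hgp : measurable_fun F gp) by (apply (mble_mult F HF); auto; [apply (mble_powR F HF); auto; lra|intros; apply powR_nonneg]).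
  assert (Hhp : measurable_fun F hp) by (apply (mble_mult F HF); auto; [apply (mble_powR F HF); auto; lra|intros; apply powR_nonneg]).
  assert (Hgp0 : forall x, 0 <= gp x) by (intros; apply Rmult_le_pos; auto; apply powR_nonneg).
  assert (Hhp0 : forall x, 0 <= hp x) by (intros; apply Rmult_le_pos; auto; apply powR_nonneg).
  assert (Hw0 : forall x, 0 <= w x) by (intros; unfold w; specialize (Hg0 x); specialize (Hh0 x); nra).
  assert (Hw : measurable_fun F w) by (apply (mble_plus F HF); try apply (mble_scal F HF); auto; try lra; intros; apply Rmult_le_pos; auto; lra).
  assert (HaC : CI mu A gp = Fin a) by exact Ha.
  assert (HbC : CI mu A hp = Fin b) by exact Hb.
  change (choquet mu A (fun x => Fin (f x))) with (CI mu A f).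
  set (rf := fun x => if Rle_dec (w x) 0 then 0 else / Rpower (w x) (q - 1)).
  set (Iint := choquet mu A (fun x => ERinv (powR (w x) (q - 1)))).
  assert (Hrf0 : forall x, 0 <= rf x).
  { intros x; unfold rf; destruct (Rle_dec (w x) 0); [lra|left; apply Rinv_0_lt_compat, Rpower_pos]. }
  assert (HLI : forall t, 0 < t -> F (fun x => A x /\ ERle (Fin t) (ERinv (powR (w x) (q - 1))))).
  { intros t Ht. apply (F_inter F HF); auto. eapply (F_ext F); [apply (mble_le_inv F HF w Hw (Rpower (/ t) (/ (q - 1))))|].
    intros x. destruct (Rle_dec (w x) 0) as [Hwx|Hwx].
    - rewrite powR_0 by auto. unfold ERinv. destruct (Req_EM_T 0 0); [|lra]. simpl.
      pose proof (Rpower_pos (/ t) (/ (q - 1))). split; auto; lra.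
    - rewrite powR_pos by lra. unfold ERinv. destruct (Req_EM_T (Rpower (w x) (q - 1)) 0) as [E|E].
      + pose proof (Rpower_pos (w x) (q - 1)); lra.
      + simpl. rewrite inv_level by lra. tauto. }
  assert (Hrf : measurable_fun F rf).
  { intros t. destruct (Rle_dec t 0) as [Ht|Ht].
    - eapply (F_ext F); [apply (F_full F HF)|]. intros x; split; auto; intros _; pose proof (Hrf0 x); lra.
    - eapply (F_ext F).
      + apply (F_inter F HF (fun x => 0 < w x) (fun x => w x <= Rpower (/ t) (/ (q - 1)))).
        * apply (mble_lt F HF); auto.
        * apply (mble_le_inv F HF); auto.
      + intros x; unfold rf. destruct (Rle_dec (w x) 0) as [Hwx|Hwx].
        * split; [intros [H1 _]; lra|intros; lra].
        * rewrite inv_level by lra. split; [intros [_ H]; auto|intros H; split; auto; lra]. }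
  assert (Hr_le : forall x, ERle (Fin (rf x)) (ERinv (powR (w x) (q - 1)))).
  { intros x; unfold rf; destruct (Rle_dec (w x) 0) as [Hwx|Hwx].
    - rewrite powR_0 by auto. unfold ERinv; destruct (Req_EM_T 0 0); [simpl; auto|lra].
    - rewrite powR_pos by lra. unfold ERinv. destruct (Req_EM_T (Rpower (w x) (q - 1)) 0) as [E|E].
      + simpl; auto.
      + simpl; lra. }
  assert (HrI : ERle (CI mu A rf) Iint).
  { apply (choquet_mono F mu Hmu); auto. intros t Ht; apply (lvl_F F HF A HA); auto. }
  assert (Part1 : ERle (CI mu A f) (ERmulR (powR 2 (/ p)) (ERmulR (powR (a * b) (/ p)) (ERpow Iint (/ q))))).
  { destruct Iint as [be|] eqn:HI.
    2:{ simpl ERpow. assert (Hc1 : 0 < powR (a * b) (/ p)) by (rewrite powR_pos by nra; apply Rpower_pos).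
        assert (Hc2 : 0 < powR 2 (/ p)) by (rewrite powR_pos by lra; apply Rpower_pos).
        rewrite !ERmulR_Inf by auto. apply ERle_Inf. }
    assert (Hbe0 : 0 <= be).
    { pose proof (int_ge0 (fun t => mu (fun x => A x /\ ERle (Fin t) (ERinv (powR (w x) (q - 1)))))) as T.
      unfold Iint, choquet in HI. rewrite HI in T. exact T. }
    set (Z := fun x => A x /\ w x <= 0).
    assert (HZF : F Z) by (apply (F_inter F HF); auto; apply (mble_le_inv F HF); auto).
    assert (HZ : mu Z = Fin 0).
    { assert (Ht : forall t, 0 < t -> exists z, mu Z = Fin z /\ 0 <= z /\ t * z <= be).
      { intros t Ht. pose proof (int_single (fun t => mu (fun x => A x /\ ERle (Fin t) (ERinv (powR (w x) (q - 1))))) t Ht) as T.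
        cbv beta in T. unfold Iint, choquet in HI. rewrite HI in T.
        assert (Sub : ERle (mu Z) (mu (fun x => A x /\ ERle (Fin t) (ERinv (powR (w x) (q - 1)))))).
        { apply (mu_mono F mu Hmu); auto. intros x [Hax Hwx]; split; auto.
          rewrite powR_0 by auto. unfold ERinv; destruct (Req_EM_T 0 0); [simpl; auto|lra]. }
        pose proof (mu_nonneg F HF mu Hmu Z HZF) as Hnn.
        destruct (mu (fun x => A x /\ ERle (Fin t) (ERinv (powR (w x) (q - 1))))) as [m|].
        - destruct (mu Z) as [z|]; [|contradiction]. exists z; simpl in *; split; auto; split; auto. nra.
        - simpl in T. destruct (Req_EM_T t 0); [lra|]. contradiction. }
      destruct (Ht 1 ltac:(lra)) as [z [Ez [Hz0 _]]]. rewrite Ez. f_equal.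
      destruct Hz0 as [Hz0|Hz0]; auto. exfalso.
      destruct (Ht ((be + 1) / z) ltac:(apply Rdiv_lt_0_compat; lra)) as [z' [Ez' [_ Hz']]].
      rewrite Ez in Ez'. injection Ez' as <-. field_simplify in Hz'; lra. }
    set (e := fun x => if Rle_dec (w x) 0 then f x else 0).
    assert (He0 : forall x, 0 <= e x) by (intros x; unfold e; destruct (Rle_dec (w x) 0); auto; lra).
    assert (Hem : measurable_fun F e).
    { intros t. destruct (Rle_dec t 0) as [Ht|Ht].
      - eapply (F_ext F); [apply (F_full F HF)|]. intros x; split; auto; intros _; pose proof (He0 x); lra.
      - eapply (F_ext F).
        + apply (F_inter F HF (fun x => w x <= 0) (fun x => t <= f x)); [apply (mble_le_inv F HF); auto|apply Hf].
        + intros x; unfold e. destruct (Rle_dec (w x) 0) as [Hwx|Hwx]; split; intros H; try tauto; lra. }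
    assert (HCe : ERle (CI mu A e) (Fin 0)).
    { rewrite CI_eq. apply int_zero_le. intros t Ht. rewrite <- HZ.
      apply (mu_mono F mu Hmu); [apply (lvl_F F HF A HA); auto|auto|].
      intros x [Hax Hx]; split; auto. unfold e in Hx. destruct (Rle_dec (w x) 0); auto; lra. }
    assert (HCr : ERle (CI mu A rf) (Fin be)) by (first [exact HrI | rewrite <- HI; exact HrI]).
    assert (Bound : forall s, 0 < s -> ERle (CI mu A f) (Fin (s / p * (b * a + a * b) + Rpower s (1 - q) / q * be))).
    { intros s Hs0.
      set (c1 := s / p). set (c2 := Rpower s (1 - q) / q).
      assert (Hc1 : 0 < c1) by (unfold c1; apply Rdiv_lt_0_compat; lra).
      assert (Hc2 : 0 < c2) by (unfold c2; apply Rdiv_lt_0_compat; [apply Rpower_pos|lra]).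
      set (Wf := fun x => b * gp x + a * hp x).
      assert (HWf0 : forall x, 0 <= Wf x) by (intros; unfold Wf; specialize (Hgp0 x); specialize (Hhp0 x); nra).
      assert (HWf : measurable_fun F Wf) by (apply (mble_plus F HF); try apply (mble_scal F HF); auto; try lra; intros; apply Rmult_le_pos; auto; lra).
      set (Y := fun x => c1 * Wf x + c2 * rf x).
      assert (HY0 : forall x, 0 <= Y x) by (intros; unfold Y; specialize (HWf0 x); specialize (Hrf0 x); nra).
      assert (HY : measurable_fun F Y) by (apply (mble_plus F HF); try apply (mble_scal F HF); auto; try lra; intros; apply Rmult_le_pos; auto; lra).
      assert (S1 : ERle (CI mu A f) (CI mu A (fun x => Y x + e x))).
      { apply (choquet_mono F mu Hmu); intros; try apply (lvl_F F HF A HA); auto.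
        - apply (mble_plus F HF); auto.
        - simpl. unfold e. destruct (Rle_dec (w x) 0) as [Hwx|Hwx]; [pose proof (HY0 x); lra|].
          rewrite Rplus_0_r. unfold Y, rf, Wf, c1, c2. destruct (Rle_dec (w x) 0); [lra|].
          pose proof (young s (w x) (f x) p q Hp HPQ Hs0 ltac:(lra) (Hf0 x)) as T.
          replace (w x * powR (f x) p) with (b * gp x + a * hp x) in T by (unfold w, gp, hp; ring).
          exact T. }
      eapply ERle_trans; [exact S1|].
      eapply ERle_trans; [apply (choquet_subadd F HF mu Hmu Hs A HA); auto|].
      rewrite <- (Rplus_0_r (c1 * (b * a + a * b) + c2 * be)).
      apply (ERadd_le _ (Fin (c1 * (b * a + a * b) + c2 * be)) _ (Fin 0)); auto.
      eapply ERle_trans; [apply (choquet_subadd F HF mu Hmu Hs A HA); try apply (mble_scal F HF); auto; try lra; intros; apply Rmult_le_pos; auto; lra|].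
      apply (ERadd_le _ (Fin (c1 * (b * a + a * b))) _ (Fin (c2 * be))).
      - eapply ERle_trans; [apply (choquet_scal_le mu A Wf c1 Hc1)|].
        apply (ERmulR_le c1 _ (Fin (b * a + a * b))); [lra|].
        eapply ERle_trans; [apply (choquet_subadd F HF mu Hmu Hs A HA); try apply (mble_scal F HF); auto; try lra; intros; apply Rmult_le_pos; auto; lra|].
        apply (ERadd_le _ (ERmulR b (Fin a)) _ (ERmulR a (Fin b))); [rewrite <- HaC|rewrite <- HbC]; apply choquet_scal_le; auto.
      - eapply ERle_trans; [apply (choquet_scal_le mu A rf c2 Hc2)|].
        apply (ERmulR_le c2 _ (Fin be)); auto; lra. }
    simpl ERpow. simpl ERmulR.
    destruct (CI mu A f) as [cf|] eqn:Hcf.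
    2:{ specialize (Bound 1 ltac:(lra)). simpl in Bound. contradiction. }
    simpl.
    destruct Hbe0 as [Hbe|Hbe].
    - set (al := b * a + a * b).
      assert (Hal : 0 < al) by (unfold al; nra).
      pose proof (opt_value al be p q Hp HPQ Hal Hbe) as Opt. cbv zeta in Opt.
      specialize (Bound (Rpower (be / al) (/ q)) (Rpower_pos _ _)). simpl in Bound.
      fold al in Bound. rewrite Opt in Bound.
      rewrite !powR_pos by (try nra; lra).
      replace al with (2 * (a * b)) in Bound by (unfold al; ring).
      rewrite <- Rpower_mult_distr in Bound by nra. lra.
    - subst be. rewrite (powR_0 0) by lra. rewrite !Rmult_0_r.
      apply (eps_le _ _ ((b * a + a * b) / p)); [unfold Rdiv; apply Rmult_le_pos; [nra|lra]|].
      intros d Hd. specialize (Bound d Hd). simpl in Bound. unfold Rdiv in *. nra. }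
  split; [exact Part1|].
  intros [gam [Hgam0 Hgam]] Hgood.
  assert (Hgam' : forall x, powR (w x) q * powR (f x) p = gam) by exact Hgam.
  assert (HZa : forall u, measurable_fun F u -> (forall x, u x = 0) -> ERle (CI mu A u) (Fin 0)).
  { intros u Hu Hu0. rewrite CI_eq. apply int_zero_le. intros t Ht.
    rewrite (mu_null F mu Hmu); [simpl; lra|]. intros x [_ Hx]. rewrite Hu0 in Hx; lra. }
  assert (Hgpos : 0 < gam).
  { destruct Hgam0 as [H|H]; auto. exfalso. subst gam.
    assert (Hz : forall x, gp x = 0).
    { intros x. unfold gp. specialize (Hgam' x). destruct (Rle_dec (w x) 0) as [Hwx|Hwx].
      - assert (g x = 0) by (unfold w in Hwx; specialize (Hg0 x); specialize (Hh0 x); nra).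
        rewrite H; ring.
      - rewrite (powR_pos (w x)) in Hgam' by lra. pose proof (Rpower_pos (w x) q).
        assert (powR (f x) p = 0) by nra. rewrite H0; ring. }
    pose proof (HZa gp Hgp Hz) as T. rewrite HaC in T. simpl in T. lra. }
  assert (Hwpos : forall x, 0 < w x).
  { intros x. destruct (Rle_dec (w x) 0) as [Hwx|Hwx]; [|lra].
    specialize (Hgam' x). rewrite powR_0 in Hgam' by auto. lra. }
  assert (Hfpos : forall x, 0 < f x).
  { intros x. destruct (Rle_dec (f x) 0) as [Hfx|Hfx]; [|lra].
    specialize (Hgam' x). rewrite (powR_0 (f x)) in Hgam' by auto. lra. }
  set (c := Rpower gam (/ p)).
  assert (Hc : 0 < c) by apply Rpower_pos.
  assert (Hrfe : forall x, rf x = / Rpower (w x) (q - 1)).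
  { intros x; unfold rf; destruct (Rle_dec (w x) 0); auto. specialize (Hwpos x); lra. }
  assert (Hfeq : forall x, f x = c * rf x).
  { intros x. rewrite Hrfe. apply (eq_solve (w x) (f x) gam p q); auto.
    specialize (Hgam' x). rewrite !powR_pos in Hgam' by auto. auto. }
  assert (HIeq : Iint = CI mu A rf).
  { unfold Iint, CI. f_equal. apply functional_extensionality; intros x.
    rewrite powR_pos by auto. unfold ERinv. destruct (Req_EM_T (Rpower (w x) (q - 1)) 0) as [E|E].
    - pose proof (Rpower_pos (w x) (q - 1)); lra.
    - rewrite Hrfe; auto. }
  assert (HCf : CI mu A f = CI mu A (fun x => c * rf x)).
  { unfold CI. f_equal. apply functional_extensionality; intros x. rewrite Hfeq; auto. }
  assert (Ge1 : ERle (ERmulR c (CI mu A rf)) (CI mu A f)).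
  { rewrite HCf. apply choquet_scal_ge; auto. }
  change (choquet mu A (fun x => ERinv (powR (b * g x + a * h x) (q - 1)))) with Iint.
  rewrite HIeq in Part1 |- *.
  destruct (CI mu A rf) as [be|] eqn:Hbe.
  2:{ rewrite ERmulR_Inf in Ge1 by auto. apply ERle_Inf_l in Ge1. rewrite Ge1.
      simpl ERpow. rewrite !ERmulR_Inf; auto.
      - rewrite powR_pos by lra; apply Rpower_pos.
      - rewrite powR_pos by nra; apply Rpower_pos. }
  assert (Key : b * a + a * b <= gam * be).
  { assert (T : ERle (Fin (b * a + a * b)) (Fin (gam * be))); [|exact T].
    apply ERle_trans with (ERadd (CI mu A (fun x => b * gp x)) (CI mu A (fun x => a * hp x))).
    - apply (ERadd_le (ERmulR b (Fin a)) _ (ERmulR a (Fin b))); [rewrite <- HaC|rewrite <- HbC]; apply choquet_scal_ge; auto.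
    - eapply ERle_trans; [apply (choquet_superadd F HF mu Hmu A HA); try apply (mble_scal F HF); auto; try lra; try (intros; apply Rmult_le_pos; auto; lra)|].
      + destruct Hgood as [H|H]; [left; auto|right]. intros x y. specialize (H x y). cbv beta in H |- *.
        replace ((b * gp x - b * gp y) * (a * hp x - a * hp y)) with ((a * b) * ((gp x - gp y) * (hp x - hp y))) by ring.
        apply Rmult_le_pos; auto; nra.
      + assert (E : (fun x => b * gp x + a * hp x) = (fun x => gam * rf x)).
        { apply functional_extensionality; intros x. rewrite Hrfe.
          replace (b * gp x + a * hp x) with (w x * powR (f x) p) by (unfold w, gp, hp; ring).
          apply (W_fp (w x) (powR (f x) p) gam q); auto.
          specialize (Hgam' x). rewrite (powR_pos (w x)) in Hgam' by auto. auto. }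
        cbv beta. rewrite E. eapply ERle_trans; [apply choquet_scal_le; auto|]. change (choquet mu A (fun x => Fin (rf x))) with (CI mu A rf). rewrite Hbe. simpl; lra. }
  assert (Hbe0 : 0 <= be).
  { pose proof (int_ge0 (fun t => mu (lvl A rf t))) as T. rewrite <- CI_eq, Hbe in T. exact T. }
  assert (Hbep : 0 < be).
  { destruct Hbe0; auto. subst be. nra. }
  apply ERle_antisym; auto.
  eapply ERle_trans; [|exact Ge1].
  simpl. rewrite !powR_pos by (try nra; lra).
  rewrite <- Rmult_assoc, (Rpower_mult_distr 2 (a * b)) by nra.
  pose proof (final_ineq (2 * (a * b)) gam be p q Hp HPQ ltac:(nra) Hbep ltac:(lra)) as T.
  unfold c. lra.
Qed.
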